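(* Assume $k(c)<0$ for all $c\in[0,1]$. For each $c\in[0,1)$ the equation (in $x\in\mathbb R$) $$\frac{\psi_\lambda(x)}{\psi'_\lambda(x)}=x-\overline x_0(c)$$ has a unique solution $\gamma(c)$, and $\gamma(c)\in(\overline x_0(c),+\infty)$; the map $\gamma$ is decreasing and $C^1$ on $[0,1)$. Define, for $c\in[0,1)$, $$W(x,c):=\begin{cases}\dfrac{\psi_\lambda(x)}{\psi_\lambda(\gamma(c))}\Big[\gamma(c)(1-c)-\lambda\Phi(c)\Big(\dfrac{\gamma(c)-\mu}{\lambda+\theta}+\dfrac{\mu}{\lambda}\Big)\Big]+\lambda\Phi(c)\Big[\dfrac{x-\mu}{\lambda+\theta}+\dfrac{\mu}{\lambda}\Big],& x<\gamma(c),\\[4pt] x(1-c),& x\ge\gamma(c),\end{cases}$$ and $W(x,1):=0$. Then $W\in W^{2,1,\infty}_{loc}(\mathbb R\times(0,1))$ and $(W,\gamma)$ satisfies: $\mathbb L_XW(x,c)-\lambda W(x,c)=-\lambda x\Phi(c)$ for $x<\gamma(c)$, $c\in[0,1)$; $W_c(x,c)\ge -x$ for all $(x,c)$; $W(x,c)=x(1-c)$ for $x\ge\gamma(c)$; $W_x(\gamma(c),c)=1-c$. Moreover $W_c(\gamma(c),c)=-\gamma(c)$, while the left limit satisfies $\lim_{x\uparrow\gamma(c)}W_{cx}(x,c)<-1$, so that $x\mapsto W_c(x,c)$ is not $C^1$ across $\gamma(c)$ (on $x>\gamma(c)$ one has $W_{cx}=-1$).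
   Context: Fix $\theta,\sigma,\mu,\lambda>0$; $\mathbb L_Xf(x):=\frac12\sigma^2f''(x)+\theta(\mu-x)f'(x)$ acting in $x$. $\Phi\in C^2(\mathbb R)$ is nonincreasing and strictly convex with $\Phi(1)=0$; $k(c):=\lambda+\theta+\lambda\Phi'(c)$. $\zeta(c):=\int_c^1k(y)dy=(\lambda+\theta)(1-c)-\lambda\Phi(c)$ (negative on $[0,1)$ under the hypothesis), and $\overline x_0(c):=\theta\mu\Phi(c)/\zeta(c)$ for $c\in[0,1)$. $\psi_\lambda(x):=e^{\frac{\theta(x-\mu)^2}{2\sigma^2}}D_{-\lambda/\theta}\big(-\frac{(x-\mu)\sqrt{2\theta}}{\sigma}\big)$, with $D_\alpha(z)=\frac{e^{-z^2/4}}{\Gamma(-\alpha)}\int_0^\infty t^{-\alpha-1}e^{-t^2/2-zt}dt$ ($\alpha<0$) the parabolic cylinder function; $\psi_\lambda$ is the positive, strictly increasing, strictly convex solution of $\mathbb L_Xf=\lambda f$. $W^{2,1,\infty}_{loc}$ denotes functions whose weak derivatives $W_x,W_{xx},W_c$ are locally essentially bounded. *)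

(* Defs.v *)
From Stdlib Require Import Reals Lra ClassicalEpsilon.
Open Scope R_scope.

Definition improper_0_inf (f : R -> R) (L : R) : Prop :=
  forall eps, 0 < eps ->
    exists a0, 0 < a0 /\ exists b0,
      forall a b, 0 < a < a0 -> b0 < b ->
        exists pr : Riemann_integrable f a b, Rabs (RiemannInt pr - L) < eps.

(** Its value (chosen via classical choice; unique when it converges). *)
Definition Iinf (f : R -> R) : R :=
  epsilon (inhabits 0) (fun L => improper_0_inf f L).

Definition Gamma (s : R) : R :=
  Iinf (fun t => Rpower t (s - 1) * exp (- t)).

(** Parabolic cylinder function D_alpha(z) (alpha < 0), integral representation. *)
Definition Dpc (alpha z : R) : R :=
  exp (- z ^ 2 / 4) / Gamma (- alpha) *
  Iinf (fun t => Rpower t (- alpha - 1) * exp (- t ^ 2 / 2 - z * t)).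

Definition psi (theta sigma mu lam x : R) : R :=
  exp (theta * (x - mu) ^ 2 / (2 * sigma ^ 2)) *
  Dpc (- lam / theta) (- (x - mu) * sqrt (2 * theta) / sigma).

(** The derivative of f at x (junk value if f is not differentiable at x). *)
Definition Deriv (f : R -> R) (x : R) : R :=
  epsilon (inhabits 0) (fun l => derivable_pt_lim f x l).

(** Derivative of f at x within the set D (one-sided at boundary points). *)
Definition deriv_within (D : R -> Prop) (f : R -> R) (x l : R) : Prop :=
  limit1_in (fun y => (f y - f x) / (y - x)) (fun y => D y /\ y <> x) l x.

Definition I01 (c : R) : Prop := 0 <= c < 1.

Definition kfun (theta lam : R) (dPhi : R -> R) (c : R) : R :=
  lam + theta + lam * dPhi c.
Definition zeta (theta lam : R) (Phi : R -> R) (c : R) : R :=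
  (lam + theta) * (1 - c) - lam * Phi c.
Definition x0bar (theta mu lam : R) (Phi : R -> R) (c : R) : R :=
  theta * mu * Phi c / zeta theta lam Phi c.

Definition Wfun (theta sigma mu lam : R) (Phi gamma : R -> R) (x c : R) : R :=
  if Rle_dec 1 c then 0
  else if Rlt_dec x (gamma c) then
    psi theta sigma mu lam x / psi theta sigma mu lam (gamma c) *
      (gamma c * (1 - c)
       - lam * Phi c * ((gamma c - mu) / (lam + theta) + mu / lam))
    + lam * Phi c * ((x - mu) / (lam + theta) + mu / lam)
  else x * (1 - c).

(* Main.v *)
Require Import Defs.
From Coquelicot Require Import Coquelicot.
From Stdlib Require Import Reals Ranalysis5 Lra Psatz ClassicalEpsilon FunctionalExtensionality.
Open Scope R_scope.


Definition IC (f : R -> R) (L : R) : Prop :=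
  forall eps, 0 < eps -> exists a0, 0 < a0 /\ exists b0,
    forall a b, 0 < a < a0 -> b0 < b -> ex_RInt f a b /\ Rabs (RInt f a b - L) < eps.

Lemma IC_improper f L : IC f L <-> improper_0_inf f L.
Proof.
  split.
  - intros H eps He. destruct (H eps He) as [a0 [Ha0 [b0 Hb]]].
    exists a0; split; auto; exists b0; intros a b Ha Hb'.
    destruct (Hb a b Ha Hb') as [Hex Hl].
    exists (ex_RInt_Reals_0 _ _ _ Hex). rewrite <- RInt_Reals. auto.
  - intros H eps He. destruct (H eps He) as [a0 [Ha0 [b0 Hb]]].
    exists a0; split; auto; exists b0; intros a b Ha Hb'.
    destruct (Hb a b Ha Hb') as [pr Hl].
    split. apply ex_RInt_Reals_1; auto. rewrite (RInt_Reals _ _ _ pr). auto.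
Qed.

Lemma IC_pick2 f g L M eps : IC f L -> IC g M -> 0 < eps ->
  exists a0, 0 < a0 /\ exists b0, forall a b, 0 < a < a0 -> b0 < b ->
    ex_RInt f a b /\ Rabs (RInt f a b - L) < eps /\
    ex_RInt g a b /\ Rabs (RInt g a b - M) < eps.
Proof.
  intros Hf Hg He.
  destruct (Hf eps He) as [a1 [Ha1 [b1 H1]]].
  destruct (Hg eps He) as [a2 [Ha2 [b2 H2]]].
  exists (Rmin a1 a2); split. apply Rmin_glb_lt; auto.
  exists (Rmax b1 b2). intros a b Ha Hb.
  assert (a < a1) by (eapply Rlt_le_trans; [apply Ha| apply Rmin_l]).
  assert (a < a2) by (eapply Rlt_le_trans; [apply Ha| apply Rmin_r]).
  assert (b1 < b) by (eapply Rle_lt_trans; [apply Rmax_l| apply Hb]).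
  assert (b2 < b) by (eapply Rle_lt_trans; [apply Rmax_r| apply Hb]).
  destruct (H1 a b) as [? ?]; try lra. destruct (H2 a b) as [? ?]; try lra.
  repeat split; auto.
Qed.

Lemma IC_unique f L M : IC f L -> IC f M -> L = M.
Proof.
  intros Hf Hg. apply Rle_antisym; apply Rnot_lt_le; intro Hlt.
  - destruct (IC_pick2 f f L M ((L - M)/2) Hf Hg) as [a0 [Ha0 [b0 H]]]; [lra|].
    destruct (H (a0/2) (Rmax b0 a0 + 1)) as [_ [H1 [_ H2]]]; try lra.
    pose proof (Rmax_l b0 a0); lra.
    revert H1 H2; unfold Rabs; repeat case Rcase_abs; intros; lra.
  - destruct (IC_pick2 f f L M ((M - L)/2) Hf Hg) as [a0 [Ha0 [b0 H]]]; [lra|].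
    destruct (H (a0/2) (Rmax b0 a0 + 1)) as [_ [H1 [_ H2]]]; try lra.
    pose proof (Rmax_l b0 a0); lra.
    revert H1 H2; unfold Rabs; repeat case Rcase_abs; intros; lra.
Qed.

Lemma Iinf_IC f L : IC f L -> Iinf f = L.
Proof.
  intros H. unfold Iinf.
  assert (Hex : exists L, improper_0_inf f L) by (exists L; apply IC_improper; auto).
  pose proof (epsilon_spec (inhabits 0) _ Hex) as Hs.
  apply IC_improper in Hs. eapply IC_unique; eauto.
Qed.

Lemma IC_plus f g L M : IC f L -> IC g M -> IC (fun t => f t + g t) (L + M).
Proof.
  intros Hf Hg eps He.
  destruct (IC_pick2 f g L M (eps/2) Hf Hg) as [a0 [Ha0 [b0 H]]]; [lra|].
  exists a0; split; auto; exists b0; intros a b Ha Hb.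
  destruct (H a b Ha Hb) as [E1 [H1 [E2 H2]]].
  split. apply (ex_RInt_plus f g); auto.
  replace (RInt (fun t => f t + g t) a b) with (RInt f a b + RInt g a b)
    by (symmetry; exact (RInt_plus f g a b E1 E2)).
  revert H1 H2; unfold Rabs; repeat case Rcase_abs; intros; lra.
Qed.

Lemma IC_scal k f L : IC f L -> IC (fun t => k * f t) (k * L).
Proof.
  intros Hf eps He.
  destruct (Hf (eps / (Rabs k + 1))) as [a0 [Ha0 [b0 H]]].
  { apply Rdiv_lt_0_compat; auto. pose proof (Rabs_pos k); lra. }
  exists a0; split; auto; exists b0; intros a b Ha Hb.
  destruct (H a b Ha Hb) as [E1 H1].
  split. apply (ex_RInt_scal f a b k); auto.
  replace (RInt (fun t => k * f t) a b) with (k * RInt f a b)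
    by (symmetry; exact (RInt_scal f a b k E1)).
  replace (k * RInt f a b - k * L) with (k * (RInt f a b - L)) by ring.
  rewrite Rabs_mult.
  pose proof (Rabs_pos k). pose proof (Rabs_pos (RInt f a b - L)).
  apply Rle_lt_trans with (Rabs k * (eps / (Rabs k + 1))).
  apply Rmult_le_compat_l; lra.
  apply Rlt_le_trans with ((Rabs k + 1) * (eps / (Rabs k + 1))).
  apply Rmult_lt_compat_r. apply Rdiv_lt_0_compat; lra. lra.
  right; field; lra.
Qed.

Lemma IC_ext f g L : (forall t, 0 < t -> f t = g t) -> IC f L -> IC g L.
Proof.
  intros Heq Hf eps He. destruct (Hf eps He) as [a0 [Ha0 [b0 H]]].
  exists (Rmin a0 1); split. apply Rmin_glb_lt; lra.
  exists (Rmax b0 1); intros a b Ha Hb.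
  assert (a < a0) by (pose proof (Rmin_l a0 1); lra).
  assert (a < 1) by (pose proof (Rmin_r a0 1); lra).
  assert (b0 < b) by (pose proof (Rmax_l b0 1); lra).
  assert (1 < b) by (pose proof (Rmax_r b0 1); lra).
  destruct (H a b) as [E1 HH1]; try lra.
  assert (Hi : forall x, Rmin a b < x < Rmax a b -> f x = g x).
  { intros x Hx. apply Heq. rewrite Rmin_left in Hx; lra. }
  split. apply (ex_RInt_ext f g); auto.
  rewrite <- (RInt_ext f g a b Hi). auto.
Qed.

Lemma IC_le f g L M : IC f L -> IC g M -> (forall t, 0 < t -> f t <= g t) -> L <= M.
Proof.
  intros Hf Hg Hle. apply Rnot_lt_le; intro Hlt.
  destruct (IC_pick2 f g L M ((L - M)/2) Hf Hg) as [a0 [Ha0 [b0 H]]]; [lra|].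
  set (a := Rmin (a0/2) 1). set (b := Rmax b0 1 + 1).
  assert (0 < a < a0). { unfold a. split. apply Rmin_glb_lt; lra. pose proof (Rmin_l (a0/2) 1); lra. }
  assert (a <= 1) by (unfold a; apply Rmin_r).
  assert (b0 < b /\ 1 < b) by (unfold b; pose proof (Rmax_l b0 1); pose proof (Rmax_r b0 1); lra).
  destruct (H a b) as [E1 [K1 [E2 K2]]]; try lra.
  assert (RInt f a b <= RInt g a b).
  { apply RInt_le; auto. lra. intros x Hx. apply Hle. lra. }
  revert K1 K2; unfold Rabs; repeat case Rcase_abs; intros; lra.
Qed.

Lemma IC_abs_le f g L M : IC f L -> IC g M -> (forall t, 0 < t -> Rabs (f t) <= g t) -> Rabs L <= M.
Proof.
  intros Hf Hg H. unfold Rabs at 1. case Rcase_abs; intro.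
  - assert (IC (fun t => -1 * f t) (-1 * L)) by (apply IC_scal; auto).
    assert (-1 * L <= M). { eapply IC_le; eauto. intros t Ht. specialize (H t Ht).
      revert H; unfold Rabs; case Rcase_abs; intros; lra. }
    lra.
  - eapply IC_le; eauto. intros t Ht. specialize (H t Ht).
      revert H; unfold Rabs; case Rcase_abs; intros; lra.
Qed.


Lemma exRI (f : R -> R) a b : (forall t, 0 < t -> continuous f t) -> 0 < a -> a <= b -> ex_RInt f a b.
Proof.
  intros Hc Ha Hab. apply (@ex_RInt_continuous R_CompleteNormedModule). intros z Hz. apply Hc.
  rewrite Rmin_left in Hz; lra.
Qed.

Lemma RInt_mono_ab (f : R -> R) a b a' b' : (forall t, 0 < t -> continuous f t) -> (forall t, 0 < t -> 0 <= f t) ->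
  0 < a' -> a' <= a -> a <= b -> b <= b' -> RInt f a b <= RInt f a' b'.
Proof.
  intros Hc Hp H1 H2 H3 H4.
  assert (E1 := exRI f a' a Hc H1 H2).
  assert (E2 := exRI f a b Hc ltac:(lra) H3).
  assert (E3 := exRI f b b' Hc ltac:(lra) H4).
  assert (E4 := ex_RInt_Chasles f _ _ _ E1 E2).
  rewrite <- (RInt_Chasles f a' b b' E4 E3).
  rewrite <- (RInt_Chasles f a' a b E1 E2).
  change (plus (plus (RInt f a' a) (RInt f a b)) (RInt f b b')) with
     (RInt f a' a + RInt f a b + RInt f b b').
  assert (0 <= RInt f a' a) by (apply RInt_ge_0; auto; intros; apply Hp; lra).
  assert (0 <= RInt f b b') by (apply RInt_ge_0; auto; intros; apply Hp; lra).
  lra.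
Qed.

Lemma IC_exists (f : R -> R) M : (forall t, 0 < t -> continuous f t) -> (forall t, 0 < t -> 0 <= f t) ->
  (forall a b, 0 < a < b -> RInt f a b <= M) ->
  exists L, IC f L /\ (forall a b, 0 < a < b -> RInt f a b <= L).
Proof.
  intros Hc Hp HM.
  set (E := fun v => exists a b, 0 < a < b /\ v = RInt f a b).
  assert (Hbd : bound E) by (exists M; intros v [a [b [Hab ->]]]; apply HM; auto).
  assert (Hne : exists v, E v) by (exists (RInt f 1 2); exists 1, 2; split; [lra|auto]).
  destruct (completeness E Hbd Hne) as [L [HL1 HL2]].
  exists L. split.
  - intros eps He.
    assert (exists v, E v /\ L - eps < v).
    { apply NNPP. intro Hn. assert (L <= L - eps); [|lra].
      apply HL2. intros v Hv. apply Rnot_lt_le. intro. apply Hn. exists v; auto. }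
    destruct H as [v [[a1 [b1 [Hab1 ->]]] Hv]].
    exists a1; split; [lra|]. exists b1. intros a b Ha Hb.
    split. apply exRI; auto; lra.
    assert (RInt f a1 b1 <= RInt f a b) by (apply RInt_mono_ab; auto; lra).
    assert (RInt f a b <= L) by (apply HL1; exists a, b; split; auto; lra).
    unfold Rabs; case Rcase_abs; intros; lra.
  - intros a b Hab. apply HL1. exists a, b; auto.
Qed.

Lemma IC_lower (f : R -> R) L a b : (forall t, 0 < t -> continuous f t) -> (forall t, 0 < t -> 0 <= f t) ->
  IC f L -> 0 < a < b -> RInt f a b <= L.
Proof.
  intros Hc Hp HL Hab. apply Rnot_lt_le; intro Hlt.
  destruct (HL (RInt f a b - L) ltac:(lra)) as [a0 [Ha0 [b0 H]]].
  set (a' := Rmin (a0/2) a). set (b' := Rmax b0 b + 1).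
  assert (0 < a' < a0 /\ a' <= a). { unfold a'. split. split. apply Rmin_glb_lt; lra.
     pose proof (Rmin_l (a0/2) a); lra. apply Rmin_r. }
  assert (b0 < b' /\ b < b') by (unfold b'; pose proof (Rmax_l b0 b); pose proof (Rmax_r b0 b); lra).
  destruct (H a' b') as [_ K]; try lra.
  assert (RInt f a b <= RInt f a' b') by (apply RInt_mono_ab; auto; lra).
  revert K; unfold Rabs; case Rcase_abs; intros; lra.
Qed.


Lemma exp_le_exp a b : a <= b -> exp a <= exp b.
Proof. intros [H|H]. left; apply exp_increasing; auto. right; rewrite H; auto. Qed.

Lemma cont_of_derive (f : R -> R) x l : is_derive f x l -> continuity_pt f x.
Proof.
  intros H. apply continuity_pt_filterlim.
  apply (@ex_derive_continuous R_AbsRing R_NormedModule). exists l; auto.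
Qed.

Lemma Rpower_pos t q : 0 < Rpower t q.
Proof. unfold Rpower; apply exp_pos. Qed.

Lemma Rpower_m1 t q : 0 < t -> Rpower t (q - 1) = Rpower t q / t.
Proof.
  intros Ht. replace (q - 1) with (q + -1) by ring. rewrite Rpower_plus.
  unfold Rpower at 2. replace (-1 * ln t) with (- ln t) by ring.
  rewrite exp_Ropp, exp_ln; auto.
Qed.

Lemma Rpower_p1 t q : 0 < t -> Rpower t (q + 1) = Rpower t q * t.
Proof. intros Ht. rewrite Rpower_plus, Rpower_1; auto. Qed.

Lemma ln_le_lin u : 0 < u -> ln u <= u - 1.
Proof.
  intros Hu. rewrite <- (ln_exp (u - 1)). apply ln_le; auto.
  pose proof (exp_ineq1_le (u - 1)). lra.
Qed.

Lemma Rpower_le_exp t q e : 0 < t -> 0 < q -> 0 < e ->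
  Rpower t q <= exp (e * t + q * Rabs (ln (e / q))).
Proof.
  intros Ht Hq He. unfold Rpower.
  assert (Hm : q * ln t <= e * t + q * Rabs (ln (e / q))).
  { assert (H1 : ln (e / q * t) <= e / q * t - 1).
    { apply ln_le_lin. apply Rmult_lt_0_compat; auto. apply Rdiv_lt_0_compat; auto. }
    rewrite ln_mult in H1; [|apply Rdiv_lt_0_compat; auto|auto].
    assert (H2 : - ln (e/q) <= Rabs (ln (e/q))) by (rewrite <- Rabs_Ropp; apply Rle_abs).
    assert (H3 : q * ln t <= q * (e / q * t - 1 - ln (e/q))) by (apply Rmult_le_compat_l; lra).
    replace (q * (e / q * t - 1 - ln (e / q))) with (e * t - q - q * ln (e/q)) in H3 by (field; lra).
    assert (H4 : q * - ln (e/q) <= q * Rabs (ln (e/q))) by (apply Rmult_le_compat_l; lra).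
    lra. }
  destruct Hm as [Hm|Hm]; [left; apply exp_increasing; auto | right; f_equal; auto].
Qed.

Lemma IC_dom (f : R -> R) p K : 0 < p -> (forall t, 0 < t -> continuous f t) -> (forall t, 0 < t -> 0 <= f t) ->
  (forall t, 0 < t -> f t <= K * Rpower t (p - 1) / (1 + Rpower t p) ^ 2) ->
  exists L, IC f L /\ (forall a b, 0 < a < b -> RInt f a b <= L).
Proof.
  intros Hp Hc Hpos Hle.
  set (g := fun t => K * Rpower t (p - 1) / (1 + Rpower t p) ^ 2).
  set (G := fun t => - (K / p) / (1 + Rpower t p)).
  assert (HK : 0 <= K).
  { specialize (Hle 1 ltac:(lra)). specialize (Hpos 1 ltac:(lra)).
    assert (0 <= K * Rpower 1 (p - 1) / (1 + Rpower 1 p) ^ 2) by lra.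
    pose proof (Rpower_pos 1 (p-1)). pose proof (Rpower_pos 1 p).
    apply Rnot_lt_le; intro. assert (K * Rpower 1 (p - 1) / (1 + Rpower 1 p) ^ 2 < 0); [|lra].
    unfold Rdiv. rewrite Rmult_assoc. apply Rmult_neg_pos; auto.
    apply Rmult_lt_0_compat; auto. apply Rinv_0_lt_compat. nra. }
  apply IC_exists with (M := K / p); auto.
  intros a b Hab.
  assert (Hder : forall x, Rmin a b <= x <= Rmax a b -> is_derive G x (g x)).
  { intros x Hx. rewrite Rmin_left, Rmax_right in Hx by lra.
    unfold G, g. rewrite Rpower_m1 by lra. unfold Rpower. auto_derive.
    - split; [lra|split; auto]. pose proof (exp_pos (p * ln x)); lra.
    - field. split; [lra|]. pose proof (exp_pos (p * ln x)); lra. }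
  assert (Hcg : forall x, Rmin a b <= x <= Rmax a b -> continuous g x).
  { intros x Hx. rewrite Rmin_left, Rmax_right in Hx by lra.
    apply (@ex_derive_continuous R_AbsRing R_NormedModule). unfold g, Rpower. auto_derive.
    split; [lra|split;[lra|split; auto]]. pose proof (exp_pos (p * ln x)).
    intro Hz. assert (1 + exp (p * ln x) > 0) by lra. nra. }
  pose proof (is_RInt_derive G g a b Hder Hcg) as HI.
  assert (Hg : RInt g a b = G b - G a) by (apply is_RInt_unique; auto).
  assert (RInt f a b <= RInt g a b).
  { apply RInt_le. lra. apply exRI; auto; lra. eexists; eauto.
    intros x Hx. apply Hle. lra. }
  assert (G b <= 0).
  { unfold G. pose proof (Rpower_pos b p). unfold Rdiv.
    assert (0 <= K/p) by (apply Rdiv_le_0_compat; lra).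
    assert (0 < / (1 + Rpower b p)) by (apply Rinv_0_lt_compat; lra). nra. }
  assert (- G a <= K / p).
  { unfold G. pose proof (Rpower_pos a p).
    assert (0 <= K/p) by (apply Rdiv_le_0_compat; lra).
    replace (- (- (K / p) / (1 + Rpower a p))) with (K / p * / (1 + Rpower a p)) by (field; lra).
    assert (/ (1 + Rpower a p) <= 1). { rewrite <- Rinv_1. apply Rinv_le_contravar; lra. }
    assert (0 < / (1 + Rpower a p)) by (apply Rinv_0_lt_compat; lra). nra. }
  lra.
Qed.


Definition gp p z t := Rpower t (p - 1) * exp (- t ^ 2 / 2 - z * t).
Definition JJ p z := Iinf (gp p z).
Definition gamI s t := Rpower t (s - 1) * exp (- t).

Ltac cont_tac := apply (@ex_derive_continuous R_AbsRing R_NormedModule); unfold Rpower; auto_derive; repeat split; auto.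

Lemma gp_cont p z t : 0 < t -> continuous (gp p z) t.
Proof. intros; unfold gp; cont_tac. Qed.
Lemma gamI_cont s t : 0 < t -> continuous (gamI s) t.
Proof. intros; unfold gamI; cont_tac. Qed.
Lemma gp_pos p z t : 0 < gp p z t.
Proof. unfold gp. apply Rmult_lt_0_compat. apply Rpower_pos. apply exp_pos. Qed.
Lemma gamI_pos s t : 0 < gamI s t.
Proof. unfold gamI. apply Rmult_lt_0_compat. apply Rpower_pos. apply exp_pos. Qed.

Lemma sq_bound t p e : 0 < t -> 0 < p -> 0 < e ->
  (1 + Rpower t p) ^ 2 <= 4 * exp (2 * e * t + 2 * (p * Rabs (ln (e / p)))).
Proof.
  intros Ht Hp He. pose proof (Rpower_le_exp t p e Ht Hp He) as H.
  set (C := p * Rabs (ln (e / p))) in *.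
  assert (0 <= C) by (unfold C; pose proof (Rabs_pos (ln (e/p))); nra).
  assert (1 <= exp (e * t + C)). { rewrite <- exp_0. apply exp_le_exp. nra. }
  replace (2 * e * t + 2 * C) with ((e * t + C) + (e * t + C)) by ring.
  rewrite exp_plus. pose proof (Rpower_pos t p). nra.
Qed.

Definition Kz p z := 4 * exp (2 * (p * Rabs (ln (1 / p))) + (2 - z) ^ 2 / 2).

Lemma gp_core p z t : 0 < t -> 0 < p -> (1 + Rpower t p) ^ 2 * exp (- t ^ 2 / 2 - z * t) <= Kz p z.
Proof.
  intros Ht Hp. pose proof (sq_bound t p 1 Ht Hp ltac:(lra)) as H.
  unfold Kz. set (C := p * Rabs (ln (1 / p))) in *.
  apply Rle_trans with (4 * exp (2 * 1 * t + 2 * C) * exp (- t ^ 2 / 2 - z * t)).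
  apply Rmult_le_compat_r; auto. left; apply exp_pos.
  rewrite Rmult_assoc, <- exp_plus. apply Rmult_le_compat_l; [lra|].
  apply exp_le_exp. pose proof (pow2_ge_0 (t - (2 - z))). simpl in *. lra.
Qed.

Lemma gp_bound p z t : 0 < t -> 0 < p -> gp p z t <= Kz p z * Rpower t (p - 1) / (1 + Rpower t p) ^ 2.
Proof.
  intros Ht Hp. pose proof (gp_core p z t Ht Hp). unfold gp.
  pose proof (Rpower_pos t (p-1)). pose proof (Rpower_pos t p).
  assert (0 < (1 + Rpower t p) ^ 2) by nra.
  apply Rmult_le_reg_r with ((1 + Rpower t p) ^ 2); auto.
  replace (Kz p z * Rpower t (p - 1) / (1 + Rpower t p) ^ 2 * (1 + Rpower t p) ^ 2) with
    (Rpower t (p-1) * Kz p z) by (field; lra).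
  rewrite Rmult_assoc. apply Rmult_le_compat_l; lra.
Qed.

Definition Kg s := 4 * exp (2 * (s * Rabs (ln (/ 4 / s)))).

Lemma gamI_bound s t : 0 < t -> 0 < s -> gamI s t <= Kg s * Rpower t (s - 1) / (1 + Rpower t s) ^ 2.
Proof.
  intros Ht Hp. pose proof (sq_bound t s (/4) Ht Hp ltac:(lra)) as H.
  assert (Hc : (1 + Rpower t s) ^ 2 * exp (- t) <= Kg s).
  { unfold Kg. set (C := s * Rabs (ln (/4 / s))) in *.
    apply Rle_trans with (4 * exp (2 * / 4 * t + 2 * C) * exp (- t)).
    apply Rmult_le_compat_r; auto. left; apply exp_pos.
    rewrite Rmult_assoc, <- exp_plus. apply Rmult_le_compat_l; [lra|].
    apply exp_le_exp. lra. }
  unfold gamI.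
  pose proof (Rpower_pos t (s-1)). pose proof (Rpower_pos t s).
  assert (0 < (1 + Rpower t s) ^ 2) by nra.
  apply Rmult_le_reg_r with ((1 + Rpower t s) ^ 2); auto.
  replace (Kg s * Rpower t (s - 1) / (1 + Rpower t s) ^ 2 * (1 + Rpower t s) ^ 2) with
    (Rpower t (s-1) * Kg s) by (field; lra).
  rewrite Rmult_assoc. apply Rmult_le_compat_l; lra.
Qed.

Lemma IC_pos_val (f : R -> R) L : (forall t, 0 < t -> continuous f t) -> (forall t, 0 < t -> 0 < f t) ->
  IC f L -> 0 < L.
Proof.
  intros Hc Hp HL.
  assert (RInt f 1 2 <= L) by (apply IC_lower; auto; [intros; left; auto | lra]).
  assert (0 < RInt f 1 2). { apply RInt_gt_0. lra. intros; apply Hp; lra. intros; apply Hc; lra. }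
  lra.
Qed.

Lemma JJ_IC p z : 0 < p -> IC (gp p z) (JJ p z).
Proof.
  intros Hp. destruct (IC_dom (gp p z) p (Kz p z) Hp) as [L [HL _]].
  intros; apply gp_cont; auto. intros; left; apply gp_pos. intros; apply gp_bound; auto.
  unfold JJ. rewrite (Iinf_IC _ L HL). auto.
Qed.

Lemma JJ_pos p z : 0 < p -> 0 < JJ p z.
Proof. intros Hp. apply (IC_pos_val (gp p z)); auto. intros; apply gp_cont; auto. intros; apply gp_pos. apply JJ_IC; auto. Qed.

Lemma Gamma_pos s : 0 < s -> 0 < Gamma s.
Proof.
  intros Hs. destruct (IC_dom (gamI s) s (Kg s) Hs) as [L [HL _]].
  intros; apply gamI_cont; auto. intros; left; apply gamI_pos. intros; apply gamI_bound; auto.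
  unfold Gamma. fold (gamI s). rewrite (Iinf_IC _ L HL).
  apply (IC_pos_val (gamI s)); auto. intros; apply gamI_cont; auto. intros; apply gamI_pos.
Qed.


Lemma Rabs_between c u : Rmin 0 u <= c <= Rmax 0 u -> Rabs c <= Rabs u.
Proof.
  intros [H1 H2]. unfold Rmin, Rmax in *. destruct (Rle_dec 0 u);
  unfold Rabs; repeat case Rcase_abs; intros; lra.
Qed.

Lemma exp_taylor u : Rabs (exp u - 1 - u) <= u ^ 2 * exp (Rabs u).
Proof.
  pose proof (MVT_gen (fun v => exp v - 1 - v) 0 u (fun v => exp v - 1)) as MV; cbv zeta in MV.
  destruct MV as [c [Hc Hf]].
  { intros x _. auto_derive; auto. ring. }
  { intros x _. eapply cont_of_derive. auto_derive; auto. }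
  pose proof (MVT_gen exp 0 c exp) as MV; cbv zeta in MV.
  destruct MV as [d [Hd He]].
  { intros x _. apply is_derive_exp. }
  { intros x _. eapply cont_of_derive. apply is_derive_exp. }
  replace (exp u - 1 - u) with (exp u - 1 - u - (exp 0 - 1 - 0)) by (rewrite exp_0; ring).
  rewrite exp_0 in *.
  rewrite Hf, He. replace (exp d * (c - 0) * (u - 0)) with (exp d * (c * u)) by ring.
  rewrite Rabs_mult, Rabs_mult. rewrite (Rabs_right (exp d)) by (left; apply exp_pos).
  pose proof (Rabs_between c u Hc). pose proof (Rabs_between d c Hd).
  assert (exp d <= exp (Rabs u)). { apply exp_le_exp. pose proof (Rle_abs d). lra. }
  assert (Rabs c * Rabs u <= u ^ 2). { replace (u^2) with (Rabs u * Rabs u).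
    apply Rmult_le_compat_r; auto. apply Rabs_pos. simpl. rewrite Rmult_1_r, <- Rabs_mult.
    apply Rabs_right. nra. }
  pose proof (Rabs_pos c). pose proof (Rabs_pos u). pose proof (exp_pos d).
  rewrite (Rmult_comm (u ^ 2)).
  apply Rmult_le_compat; auto. left; auto. apply Rmult_le_pos; auto.
Qed.

Lemma gp_shift p z h t : gp p (z + h) t = gp p z t * exp (- h * t).
Proof. unfold gp. rewrite Rmult_assoc, <- exp_plus. f_equal. f_equal. ring. Qed.

Lemma gp_S p z t : 0 < t -> gp (p + 1) z t = t * gp p z t.
Proof. intros Ht. unfold gp. replace (p + 1 - 1) with ((p - 1) + 1) by ring. rewrite Rpower_p1; auto. ring. Qed.

Lemma gp_SS p z t : 0 < t -> gp (p + 2) (z - 1) t = t ^ 2 * gp p z t * exp t.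
Proof.
  intros Ht. unfold gp. replace (p + 2 - 1) with ((p - 1) + 1 + 1) by ring. rewrite !Rpower_p1; auto.
  replace (- t ^ 2 / 2 - (z - 1) * t) with ((- t ^ 2 / 2 - z * t) + t) by ring. rewrite exp_plus. ring.
Qed.

Lemma JJ_deriv p z : 0 < p -> derivable_pt_lim (JJ p) z (- JJ (p + 1) z).
Proof.
  intros Hp.
  assert (HB : forall h, h <> 0 -> Rabs h <= 1 ->
     Rabs ((JJ p (z + h) - JJ p z) / h - - JJ (p + 1) z) <= Rabs h * JJ (p + 2) (z - 1)).
  { intros h Hh Hh1.
    assert (Hq : IC (fun t => / h * gp p (z + h) t + (- / h * gp p z t + 1 * gp (p + 1) z t))
               (/ h * JJ p (z + h) + (- / h * JJ p z + 1 * JJ (p + 1) z))).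
    { apply IC_plus. apply IC_scal, JJ_IC; auto. apply IC_plus; apply IC_scal, JJ_IC; lra. }
    assert (Hr : IC (fun t => Rabs h * gp (p + 2) (z - 1) t) (Rabs h * JJ (p + 2) (z - 1))).
    { apply IC_scal, JJ_IC; lra. }
    replace ((JJ p (z + h) - JJ p z) / h - - JJ (p + 1) z) with
      (/ h * JJ p (z + h) + (- / h * JJ p z + 1 * JJ (p + 1) z)) by (field; auto).
    apply (IC_abs_le _ _ _ _ Hq Hr). intros t Ht.
    rewrite gp_shift, gp_S, gp_SS; auto.
    replace (/ h * (gp p z t * exp (- h * t)) + (- / h * gp p z t + 1 * (t * gp p z t))) with
      (gp p z t * / h * (exp (- h * t) - 1 - (- h * t))) by (field; auto).
    rewrite !Rabs_mult. pose proof (gp_pos p z t) as G0.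
    rewrite (Rabs_right (gp p z t)) by lra.
    pose proof (exp_taylor (- h * t)) as T1.
    rewrite Rabs_inv.
    assert (A0 : 0 < Rabs h) by (apply Rabs_pos_lt; auto).
    assert (A1 : exp (Rabs (- h * t)) <= exp t).
    { apply exp_le_exp. rewrite Rabs_mult, Rabs_Ropp, (Rabs_right t) by lra. nra. }
    assert (A2 : (- h * t) ^ 2 = Rabs h * Rabs h * t ^ 2).
    { simpl. rewrite <- Rabs_mult. rewrite Rabs_right. ring. nra. }
    rewrite A2 in T1.
    apply Rle_trans with (gp p z t * / Rabs h * (Rabs h * Rabs h * t ^ 2 * exp t)).
    apply Rmult_le_compat_l. apply Rmult_le_pos; [lra| left; apply Rinv_0_lt_compat; auto].
    eapply Rle_trans; [apply T1|]. apply Rmult_le_compat_l; [|auto]. apply Rmult_le_pos; [nra| apply pow2_ge_0].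
    right. field. lra. }
  intros eps He.
  pose proof (JJ_pos (p + 2) (z - 1) ltac:(lra)) as HJ.
  set (M := JJ (p + 2) (z - 1)) in *.
  assert (Hd0 : 0 < Rmin 1 (eps / (M + 1))).
  { apply Rmin_glb_lt. lra. apply Rdiv_lt_0_compat; lra. }
  exists (mkposreal _ Hd0).
  intros h Hh Hd. simpl in Hd.
  assert (Rabs h <= 1) by (pose proof (Rmin_l 1 (eps / (M + 1))); lra).
  assert (Rabs h < eps / (M + 1)) by (pose proof (Rmin_r 1 (eps / (M + 1))); lra).
  eapply Rle_lt_trans. apply HB; auto.
  apply Rle_lt_trans with (eps / (M + 1) * M). apply Rmult_le_compat_r; lra.
  apply Rlt_le_trans with (eps / (M + 1) * (M + 1)). apply Rmult_lt_compat_l. apply Rdiv_lt_0_compat; lra. lra.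
  right; field; lra.
Qed.


Definition Hb p z t := Rpower t p * exp (- t ^ 2 / 2 - z * t).

Lemma gp_forms p z t : 0 < t ->
  gp p z t = Rpower t p / t * exp (- t ^ 2 / 2 - z * t) /\
  gp (p + 1) z t = Rpower t p * exp (- t ^ 2 / 2 - z * t) /\
  gp (p + 2) z t = Rpower t p * t * exp (- t ^ 2 / 2 - z * t).
Proof.
  intros Ht. unfold gp. split; [|split].
  - rewrite Rpower_m1; auto.
  - f_equal. f_equal. ring.
  - replace (p + 2 - 1) with (p + 1) by ring. rewrite Rpower_p1; auto.
Qed.

Lemma Hb_deriv p z t : 0 < t ->
  is_derive (Hb p z) t (p * gp p z t - gp (p + 2) z t - z * gp (p + 1) z t).
Proof.
  intros Ht. destruct (gp_forms p z t Ht) as [E1 [E2 E3]]. rewrite E1, E2, E3.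
  unfold Hb, Rpower. auto_derive. auto. replace (- (t * (t * 1)) * / 2 + - (z * t)) with (- t ^ 2 / 2 - z * t) by (simpl; field). field. lra.
Qed.

Lemma Hb_bound p z t : 0 < p -> 0 < t -> 0 < Hb p z t /\ Hb p z t <= Kz p z * Rpower t p /\ Hb p z t <= Kz p z / Rpower t p.
Proof.
  intros Hp Ht. pose proof (gp_core p z t Ht Hp) as C.
  pose proof (Rpower_pos t p) as R0. pose proof (exp_pos (- t ^ 2 / 2 - z * t)) as E0.
  set (E := exp (- t ^ 2 / 2 - z * t)) in *. set (P := Rpower t p) in *.
  unfold Hb. fold P E.
  split. apply Rmult_lt_0_compat; auto.
  assert (E <= Kz p z / (1 + P) ^ 2).
  { apply Rmult_le_reg_r with ((1 + P)^2). nra. unfold Rdiv. rewrite Rmult_assoc, Rinv_l. lra.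
    apply pow_nonzero. lra. }
  assert (0 <= Kz p z) by nra.
  split.
  - apply Rle_trans with (P * (Kz p z / (1 + P) ^ 2)). apply Rmult_le_compat_l; lra.
    apply Rle_trans with (P * (Kz p z / 1)). apply Rmult_le_compat_l. lra.
    unfold Rdiv. apply Rmult_le_compat_l; auto. apply Rinv_le_contravar. lra. nra. right; field.
  - apply Rle_trans with (P * (Kz p z / (1 + P) ^ 2)). apply Rmult_le_compat_l; lra.
    apply Rle_trans with (P * (Kz p z / (P * P))). apply Rmult_le_compat_l. lra.
    unfold Rdiv. apply Rmult_le_compat_l; auto. apply Rinv_le_contravar. nra. nra. right; field. lra.
Qed.

Lemma Rpower_small p d a : 0 < p -> 0 < d -> 0 < a < Rpower d (/ p) -> Rpower a p < d.
Proof.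
  intros Hp Hd Ha.
  assert (E : Rpower (Rpower d (/ p)) p = d) by (rewrite Rpower_mult, Rinv_l, Rpower_1; auto; lra).
  rewrite <- E at 1. apply Rlt_Rpower_l; auto.
Qed.

Lemma Rpower_big p d b : 0 < p -> 0 < d -> Rpower d (/ p) < b -> d < Rpower b p.
Proof.
  intros Hp Hd Hb.
  assert (E : Rpower (Rpower d (/ p)) p = d) by (rewrite Rpower_mult, Rinv_l, Rpower_1; auto; lra).
  rewrite <- E at 1. apply Rlt_Rpower_l; auto. split; auto. apply Rpower_pos.
Qed.

Lemma JJ_rec_IC p z : 0 < p -> IC (fun t => p * gp p z t - gp (p + 2) z t - z * gp (p + 1) z t) 0.
Proof.
  intros Hp eps He.
  set (K := Kz p z). assert (HK : 0 < K) by (unfold K, Kz; pose proof (exp_pos (2 * (p * Rabs (ln (1 / p))) + (2 - z) ^ 2 / 2)); lra).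
  set (d := eps / 2 / (K + 1)). assert (Hd : 0 < d) by (unfold d; apply Rdiv_lt_0_compat; lra).
  exists (Rmin 1 (Rpower d (/ p))). split. apply Rmin_glb_lt. lra. apply Rpower_pos.
  exists (Rmax 1 (Rpower (/ d) (/ p))). intros a b Ha Hb'.
  pose proof (Rmin_l 1 (Rpower d (/ p))). pose proof (Rmin_r 1 (Rpower d (/ p))).
  pose proof (Rmax_l 1 (Rpower (/ d) (/ p))). pose proof (Rmax_r 1 (Rpower (/ d) (/ p))).
  assert (Hab : a < b) by lra.
  assert (Hder : forall x, Rmin a b <= x <= Rmax a b ->
     is_derive (Hb p z) x (p * gp p z x - gp (p + 2) z x - z * gp (p + 1) z x)).
  { intros x Hx. rewrite Rmin_left, Rmax_right in Hx by lra. apply Hb_deriv. lra. }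
  assert (Hcont : forall x, Rmin a b <= x <= Rmax a b ->
     continuous (fun t => p * gp p z t - gp (p + 2) z t - z * gp (p + 1) z t) x).
  { intros x Hx. rewrite Rmin_left, Rmax_right in Hx by lra. unfold gp. cont_tac; lra. }
  pose proof (is_RInt_derive _ _ a b Hder Hcont) as HI.
  split. eexists; eauto.
  rewrite (is_RInt_unique _ _ _ _ HI).
  change (minus (Hb p z b) (Hb p z a)) with (Hb p z b - Hb p z a).
  destruct (Hb_bound p z a Hp ltac:(lra)) as [A1 [A2 _]].
  destruct (Hb_bound p z b Hp ltac:(lra)) as [B1 [_ B3]].
  assert (Rpower a p < d) by (apply Rpower_small; auto; lra).
  assert (/ d < Rpower b p) by (apply Rpower_big; auto; [apply Rinv_0_lt_compat; auto | lra]).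
  assert (K * Rpower a p <= K * d) by (apply Rmult_le_compat_l; lra).
  assert (K / Rpower b p <= K * d).
  { unfold Rdiv. apply Rmult_le_compat_l. lra. replace d with (/ / d) by (field; lra).
    apply Rinv_le_contravar. apply Rinv_0_lt_compat; auto. lra. }
  assert (K * d < eps / 2).
  { unfold d. apply Rlt_le_trans with ((K + 1) * (eps / 2 / (K + 1))).
    apply Rmult_lt_compat_r. apply Rdiv_lt_0_compat; lra. lra. right; field; lra. }
  fold K in A2, B3.
  rewrite Rminus_0_r. unfold Rabs; case Rcase_abs; intros; lra.
Qed.

Lemma JJ_rec p z : 0 < p -> JJ (p + 2) z + z * JJ (p + 1) z = p * JJ p z.
Proof.
  intros Hp.
  assert (H1 : IC (fun t => p * gp p z t + (-1 * gp (p + 2) z t + - z * gp (p + 1) z t))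
    (p * JJ p z + (-1 * JJ (p + 2) z + - z * JJ (p + 1) z))).
  { apply IC_plus. apply IC_scal, JJ_IC; auto. apply IC_plus; apply IC_scal, JJ_IC; lra. }
  assert (H2 := JJ_rec_IC p z Hp).
  apply (IC_ext _ (fun t => p * gp p z t - gp (p + 2) z t - z * gp (p + 1) z t)) in H1.
  pose proof (IC_unique _ _ _ H1 H2). lra.
  intros; ring.
Qed.


Lemma Deriv_eq f x l : derivable_pt_lim f x l -> Deriv f x = l.
Proof.
  intros H. unfold Deriv.
  assert (Hex : exists l, derivable_pt_lim f x l) by (exists l; auto).
  pose proof (epsilon_spec (inhabits 0) _ Hex) as Hs.
  eapply uniqueness_limite; eauto.
Qed.

Section PsiSec.
Variables theta sigma mu lam : R.
Hypothesis Htheta : 0 < theta.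
Hypothesis Hsigma : 0 < sigma.
Hypothesis Hlam : 0 < lam.

Let s := lam / theta.
Let k := sqrt (2 * theta) / sigma.
Let G := Gamma s.

Lemma s_pos : 0 < s. Proof. unfold s; apply Rdiv_lt_0_compat; auto. Qed.
Lemma k_pos : 0 < k. Proof. unfold k. apply Rdiv_lt_0_compat; auto. apply sqrt_lt_R0; lra. Qed.
Lemma G_pos : 0 < G. Proof. apply Gamma_pos, s_pos. Qed.
Lemma k2 : k * k = 2 * theta / sigma ^ 2.
Proof. unfold k. replace (sqrt (2 * theta) / sigma * (sqrt (2 * theta) / sigma)) with
  (sqrt (2 * theta) * sqrt (2 * theta) / sigma ^ 2) by (field; lra). rewrite sqrt_sqrt; lra. Qed.

Definition ps0 x := JJ s (k * (mu - x)) / G.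
Definition ps1 x := k * JJ (s + 1) (k * (mu - x)) / G.
Definition ps2 x := k ^ 2 * JJ (s + 2) (k * (mu - x)) / G.
Definition ps3 x := k ^ 3 * JJ (s + 3) (k * (mu - x)) / G.

Lemma psi_eq x : psi theta sigma mu lam x = ps0 x.
Proof.
  unfold psi, Dpc, ps0, JJ.
  replace (- (- lam / theta)) with s by (unfold s; field; lra).
  replace (- (x - mu) * sqrt (2 * theta) / sigma) with (k * (mu - x)) by (unfold k; field; lra).
  fold (gp s (k * (mu - x))). unfold G.
  replace (exp (theta * (x - mu) ^ 2 / (2 * sigma ^ 2)) * (exp (- (k * (mu - x)) ^ 2 / 4) / Gamma s *
     Iinf (gp s (k * (mu - x))))) with
     (exp (theta * (x - mu) ^ 2 / (2 * sigma ^ 2) + - (k * (mu - x)) ^ 2 / 4) * Iinf (gp s (k * (mu - x))) / Gamma s)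
    by (rewrite exp_plus; field; apply Rgt_not_eq, G_pos).
  replace (theta * (x - mu) ^ 2 / (2 * sigma ^ 2) + - (k * (mu - x)) ^ 2 / 4) with 0.
  rewrite exp_0. field. apply Rgt_not_eq, G_pos.
  replace ((k * (mu - x)) ^ 2) with (k * k * (mu - x) ^ 2) by ring. rewrite k2. field. lra.
Qed.

Lemma JJ_comp_deriv p x : 0 < p ->
  derivable_pt_lim (fun y => JJ p (k * (mu - y))) x (k * JJ (p + 1) (k * (mu - x))).
Proof.
  intros Hp.
  replace (k * JJ (p + 1) (k * (mu - x))) with ((- JJ (p + 1) (k * (mu - x))) * (- k)) by ring.
  apply (derivable_pt_lim_comp (fun y => k * (mu - y)) (JJ p)).
  - apply is_derive_Reals. auto_derive; auto. ring.
  - apply JJ_deriv; auto.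
Qed.

Lemma ps0_deriv x : derivable_pt_lim ps0 x (ps1 x).
Proof.
  unfold ps0, ps1. pose proof (JJ_comp_deriv s x s_pos) as H.
  replace (k * JJ (s + 1) (k * (mu - x)) / G) with (k * JJ (s + 1) (k * (mu - x)) * / G) by auto.
  apply (derivable_pt_lim_scal_right _ _ _ _ H) || (unfold Rdiv; apply derivable_pt_lim_mult_r || idtac).
Qed.

Lemma gen_deriv p c x : 0 < p ->
  derivable_pt_lim (fun y => c * JJ p (k * (mu - y)) / G) x (c * k * JJ (p + 1) (k * (mu - x)) / G).
Proof.
  intros Hp. pose proof (JJ_comp_deriv p x Hp) as H.
  unfold Rdiv. replace (c * k * JJ (p + 1) (k * (mu - x)) * / G) with (c * / G * (k * JJ (p + 1) (k * (mu - x)))) by ring.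
  replace (fun y => c * JJ p (k * (mu - y)) * / G) with (fun y => c * / G * JJ p (k * (mu - y))).
  apply derivable_pt_lim_scal; auto.
  apply functional_extensionality; intro; ring.
Qed.

Lemma ps1_deriv x : derivable_pt_lim ps1 x (ps2 x).
Proof.
  unfold ps1, ps2. pose proof (gen_deriv (s + 1) k x ltac:(pose proof s_pos; lra)) as H.
  replace (s + 1 + 1) with (s + 2) in H by ring. replace (k ^ 2) with (k * k) by ring. auto.
Qed.

Lemma ps2_deriv x : derivable_pt_lim ps2 x (ps3 x).
Proof.
  unfold ps2, ps3. pose proof (gen_deriv (s + 2) (k ^ 2) x ltac:(pose proof s_pos; lra)) as H.
  replace (s + 2 + 1) with (s + 3) in H by ring. replace (k ^ 3) with (k ^ 2 * k) by ring. auto.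
Qed.

Lemma ps_pos x : 0 < ps0 x /\ 0 < ps1 x /\ 0 < ps2 x.
Proof.
  pose proof s_pos. pose proof k_pos. pose proof G_pos.
  unfold ps0, ps1, ps2. repeat split; apply Rdiv_lt_0_compat; auto.
  apply JJ_pos; lra.
  apply Rmult_lt_0_compat; auto. apply JJ_pos; lra.
  apply Rmult_lt_0_compat; auto. apply pow_lt; auto. apply JJ_pos; lra.
Qed.

Lemma ps_ode x : / 2 * sigma ^ 2 * ps2 x + theta * (mu - x) * ps1 x = lam * ps0 x.
Proof.
  unfold ps0, ps1, ps2. pose proof (JJ_rec s (k * (mu - x)) s_pos) as R.
  pose proof G_pos. set (z := k * (mu - x)) in *.
  transitivity (theta * (JJ (s + 2) z + z * JJ (s + 1) z) / G).
  { unfold z. replace (k ^ 2) with (2 * theta / sigma ^ 2) by (rewrite <- k2; ring). field. split; lra. }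
  rewrite R. unfold s. field. split; lra.
Qed.
End PsiSec.


Lemma deriv_local (f g : R -> R) x l :
  (exists d, 0 < d /\ forall y, Rabs (y - x) < d -> f y = g y) ->
  derivable_pt_lim g x l -> derivable_pt_lim f x l.
Proof.
  intros [d [Hd He]] Hg eps Heps. destruct (Hg eps Heps) as [del Hdel].
  assert (H0 : 0 < Rmin d del) by (apply Rmin_glb_lt; auto; apply cond_pos).
  exists (mkposreal _ H0). intros h Hh Hhd. simpl in Hhd.
  rewrite (He (x + h)), (He x).
  apply Hdel; auto. pose proof (Rmin_r d del); lra.
  rewrite Rminus_diag, Rabs_R0; auto.
  replace (x + h - x) with h by ring. pose proof (Rmin_l d del); lra.
Qed.

Lemma deriv_either (f g1 g2 : R -> R) x l :
  (forall y, f y = g1 y \/ f y = g2 y) -> f x = g1 x -> f x = g2 x ->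
  derivable_pt_lim g1 x l -> derivable_pt_lim g2 x l -> derivable_pt_lim f x l.
Proof.
  intros Hf E1 E2 H1 H2 eps Heps.
  destruct (H1 eps Heps) as [d1 Hd1]. destruct (H2 eps Heps) as [d2 Hd2].
  assert (H0 : 0 < Rmin d1 d2) by (apply Rmin_glb_lt; apply cond_pos).
  exists (mkposreal _ H0). intros h Hh Hhd. simpl in Hhd.
  pose proof (Rmin_l d1 d2). pose proof (Rmin_r d1 d2).
  destruct (Hf (x + h)) as [E|E]; rewrite E.
  rewrite E1. apply Hd1; auto; lra.
  rewrite E2. apply Hd2; auto; lra.
Qed.

Lemma deriv_within_of (D : R -> Prop) f x l : derivable_pt_lim f x l -> deriv_within D f x l.
Proof.
  intros H eps Heps. destruct (H eps Heps) as [d Hd].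
  exists d. split. apply cond_pos. intros y [[_ Hy] Hyd].
  simpl in *. unfold R_dist in *.
  replace y with (x + (y - x)) at 1 by ring.
  apply Hd. lra. auto.
Qed.

Lemma limit_of_cont (D : R -> Prop) f x : continuity_pt f x -> limit1_in f D (f x) x.
Proof.
  intros H eps Heps. destruct (H eps Heps) as [a [Ha Hx]]. exists a. split; auto.
  intros y [Dy Hy]. destruct (Req_dec y x) as [->|Hne].
  simpl. unfold R_dist. rewrite Rminus_diag, Rabs_R0; lra.
  apply Hx. split; auto. split; auto. constructor.
Qed.

Lemma cont_bound f a b : (forall x, a <= x <= b -> continuity_pt f x) ->
  exists M, forall x, a <= x <= b -> Rabs (f x) <= M.
Proof.
  intros H. destruct (Rle_dec a b) as [Hab|Hab].
  - destruct (continuity_ab_maj (fun x => Rabs (f x)) a b Hab) as [m [Hm _]].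
    intros c Hc. apply (continuity_pt_comp f Rabs). auto. apply Rcontinuity_abs.
    exists (Rabs (f m)). auto.
  - exists 0. intros; lra.
Qed.

Lemma cont_of_deriv f x l : derivable_pt_lim f x l -> continuity_pt f x.
Proof. intros H. apply derivable_continuous_pt. exists l. auto. Qed.

Lemma deriv_Reals f x l : is_derive f x l -> derivable_pt_lim f x l.
Proof. apply is_derive_Reals. Qed.
Lemma Reals_deriv f x l : derivable_pt_lim f x l -> is_derive f x l.
Proof. apply is_derive_Reals. Qed.

Lemma incr_on (f df : R -> R) a b :
  (forall x, a <= x <= b -> is_derive f x (df x)) -> (forall x, a <= x <= b -> 0 < df x) ->
  a < b -> f a < f b.
Proof.
  intros Hd Hp Hab.
  pose proof (MVT_gen f a b df) as MV; cbv zeta in MV.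
  rewrite Rmin_left, Rmax_right in MV by lra.
  destruct MV as [c [Hc E]].
  intros x Hx; apply Hd; lra.
  intros x Hx; eapply cont_of_derive; apply Hd; lra.
  assert (0 < df c) by (apply Hp; lra). nra.
Qed.

Lemma Derive_R (f : R -> R) x l : is_derive f x l -> Derive (fun y : R => f y) x = l.
Proof. intros H. apply is_derive_unique. auto. Qed.


Section PhiSec.
Variables theta mu lam : R.
Variables Phi dPhi : R -> R.
Hypothesis Htheta : 0 < theta.
Hypothesis Hmu : 0 < mu.
Hypothesis Hlam : 0 < lam.
Hypothesis HdPhi : forall x, derivable_pt_lim Phi x (dPhi x).
Hypothesis Hnoninc : forall x y, x <= y -> Phi y <= Phi x.
Hypothesis Hconv : forall x y t, x < y -> 0 < t < 1 ->
             Phi (t * x + (1 - t) * y) < t * Phi x + (1 - t) * Phi y.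
Hypothesis HPhi1 : Phi 1 = 0.
Hypothesis Hk : forall c, 0 <= c <= 1 -> kfun theta lam dPhi c < 0.

Lemma Phi_nonneg c : c <= 1 -> 0 <= Phi c.
Proof. intros. rewrite <- HPhi1. apply Hnoninc; auto. Qed.

Lemma dPhi_bound c : 0 <= c <= 1 -> lam * dPhi c < - (lam + theta).
Proof. intros H. pose proof (Hk c H). unfold kfun in *. lra. Qed.

Lemma tangent_le c y : c < y -> dPhi c * (y - c) <= Phi y - Phi c.
Proof.
  intros Hcy. apply Rnot_lt_le. intro Hlt.
  set (q := (Phi y - Phi c) / (y - c)).
  assert (Hq : q < dPhi c) by (unfold q; apply Rmult_lt_reg_r with (y - c); [lra|];
     unfold Rdiv; rewrite Rmult_assoc, Rinv_l; lra).
  destruct (HdPhi c (dPhi c - q) ltac:(lra)) as [d Hd].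
  set (u := Rmin (/2) (d / 2 / (y - c))).
  assert (Hu : 0 < u < 1).
  { unfold u. split. apply Rmin_glb_lt. lra. apply Rdiv_lt_0_compat. pose proof (cond_pos d); lra. lra.
    pose proof (Rmin_l (/2) (d / 2 / (y - c))). lra. }
  set (h := u * (y - c)).
  assert (Hh0 : 0 < h) by (unfold h; nra).
  assert (Hhd : h < d).
  { unfold h. assert (u <= d / 2 / (y - c)) by apply Rmin_r.
    apply Rle_lt_trans with (d / 2 / (y - c) * (y - c)). apply Rmult_le_compat_r; lra.
    replace (d / 2 / (y - c) * (y - c)) with (d / 2) by (field; lra). pose proof (cond_pos d); lra. }
  specialize (Hd h ltac:(lra) ltac:(rewrite Rabs_right; lra)).
  assert (Hc : Phi (c + h) < Phi c + u * (Phi y - Phi c)).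
  { pose proof (Hconv c y (1 - u) Hcy ltac:(lra)) as Hcv.
    replace ((1 - u) * c + (1 - (1 - u)) * y) with (c + h) in Hcv by (unfold h; ring). lra. }
  assert ((Phi (c + h) - Phi c) / h < q).
  { unfold q. apply Rmult_lt_reg_r with h; auto. unfold Rdiv. rewrite Rmult_assoc, Rinv_l by lra.
    replace ((Phi y - Phi c) * / (y - c) * h) with (u * (Phi y - Phi c)) by (unfold h; field; lra).
    lra. }
  revert Hd. unfold Rabs. case Rcase_abs; intros; lra.
Qed.

Lemma tangent_strict c : c < 1 -> Phi c + dPhi c * (1 - c) < 0.
Proof.
  intros Hc. set (m := (c + 1) / 2).
  pose proof (tangent_le c m ltac:(unfold m; lra)).
  pose proof (Hconv c 1 (/2) Hc ltac:(lra)) as Hcv.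
  replace (/ 2 * c + (1 - / 2) * 1) with m in Hcv by (unfold m; field).
  rewrite HPhi1 in Hcv. unfold m in *.
  replace ((c + 1) / 2 - c) with ((1 - c) / 2) in H by field. lra.
Qed.

Lemma zeta_deriv c : is_derive (zeta theta lam Phi) c (- kfun theta lam dPhi c).
Proof.
  unfold zeta, kfun. auto_derive.
  exists (dPhi c). apply Reals_deriv; auto.
  rewrite (Derive_R Phi c (dPhi c)). ring. apply Reals_deriv; auto.
Qed.

Lemma zeta_neg c : 0 <= c < 1 -> zeta theta lam Phi c < 0.
Proof.
  intros Hc. assert (zeta theta lam Phi 1 = 0) by (unfold zeta; rewrite HPhi1; ring).
  assert (zeta theta lam Phi c < zeta theta lam Phi 1); [|lra].
  apply (incr_on _ (fun c => - kfun theta lam dPhi c)); [| |lra].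
  intros; apply zeta_deriv. intros x Hx. pose proof (Hk x ltac:(lra)). lra.
Qed.

Lemma x0bar_nonpos c : 0 <= c < 1 -> x0bar theta mu lam Phi c <= 0.
Proof.
  intros Hc. unfold x0bar. pose proof (zeta_neg c Hc). pose proof (Phi_nonneg c ltac:(lra)).
  unfold Rdiv. assert (0 <= theta * mu * Phi c) by (apply Rmult_le_pos; nra).
  assert (/ zeta theta lam Phi c < 0) by (apply Rinv_lt_0_compat; auto). nra.
Qed.

Definition dx0 c := theta * mu * (dPhi c * zeta theta lam Phi c + kfun theta lam dPhi c * Phi c)
   / (zeta theta lam Phi c) ^ 2.

Lemma x0bar_deriv c : zeta theta lam Phi c <> 0 -> is_derive (x0bar theta mu lam Phi) c (dx0 c).
Proof.
  intros Hz. unfold x0bar, dx0.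
  assert (E1 : is_derive Phi c (dPhi c)) by (apply Reals_deriv; auto).
  assert (E2 := zeta_deriv c).
  auto_derive.
  split. eexists; eauto. split. eexists; eauto. split; auto.
  rewrite (Derive_R Phi c (dPhi c)) by auto.
  rewrite (Derive_R (zeta theta lam Phi) c _ E2).
  field. auto.
Qed.

Lemma dx0_neg c : 0 <= c < 1 -> dx0 c < 0.
Proof.
  intros Hc. unfold dx0.
  assert (E : dPhi c * zeta theta lam Phi c + kfun theta lam dPhi c * Phi c =
     (lam + theta) * (Phi c + dPhi c * (1 - c))) by (unfold zeta, kfun; ring).
  rewrite E. pose proof (tangent_strict c ltac:(lra)). pose proof (zeta_neg c Hc).
  apply Rmult_lt_reg_r with ((zeta theta lam Phi c) ^ 2). nra.
  unfold Rdiv. rewrite Rmult_assoc, Rinv_l. 2: apply pow_nonzero; lra.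
  rewrite Rmult_0_l. assert (0 < theta * mu) by nra.
  assert ((lam + theta) * (Phi c + dPhi c * (1 - c)) < 0) by nra. nra.
Qed.

End PhiSec.


Section HSec.
Variables theta sigma mu lam : R.
Hypothesis Htheta : 0 < theta.
Hypothesis Hsigma : 0 < sigma.
Hypothesis Hlam : 0 < lam.
Variables ps ps1 ps2 : R -> R.
Hypothesis Hd0 : forall x, is_derive ps x (ps1 x).
Hypothesis Hd1 : forall x, is_derive ps1 x (ps2 x).
Hypothesis Hc2 : forall x, continuity_pt ps2 x.
Hypothesis Hpos : forall x, 0 < ps x /\ 0 < ps1 x /\ 0 < ps2 x.
Hypothesis Hode : forall x, / 2 * sigma ^ 2 * ps2 x + theta * (mu - x) * ps1 x = lam * ps x.

Definition hh x := x - ps x / ps1 x.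
Definition hd x := ps x * ps2 x / (ps1 x) ^ 2.

Lemma hh_deriv x : is_derive hh x (hd x).
Proof.
  unfold hh, hd. destruct (Hpos x) as [P0 [P1 P2]]. auto_derive.
  repeat split; try (eexists; apply Hd0 || apply Hd1); lra.
  rewrite (Derive_R ps x _ (Hd0 x)), (Derive_R ps1 x _ (Hd1 x)). field. lra.
Qed.

Lemma hd_pos x : 0 < hd x.
Proof. unfold hd. destruct (Hpos x) as [P0 [P1 P2]]. apply Rdiv_lt_0_compat. nra. nra. Qed.

Lemma ps_cont x : continuity_pt ps x.
Proof. eapply cont_of_derive. apply Hd0. Qed.
Lemma ps1_cont x : continuity_pt ps1 x.
Proof. eapply cont_of_derive. apply Hd1. Qed.

Lemma hd_cont x : continuity_pt hd x.
Proof.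
  unfold hd. destruct (Hpos x) as [P0 [P1 P2]].
  apply (continuity_pt_div (fun x => ps x * ps2 x) (fun x => ps1 x ^ 2)).
  apply (continuity_pt_mult ps ps2). apply ps_cont. auto.
  apply (continuity_pt_mult ps1 (fun x => ps1 x ^ 1)). apply ps1_cont.
  apply (continuity_pt_mult ps1 (fun _ => 1)). apply ps1_cont. apply continuity_pt_const. intros a b; auto.
  apply pow_nonzero. lra.
Qed.

Lemma hh_cont : continuity hh.
Proof. intros x. eapply cont_of_derive. apply hh_deriv. Qed.

Lemma hh_incr x y : x < y -> hh x < hh y.
Proof. intros H. apply (incr_on hh hd); auto. intros; apply hh_deriv. intros; apply hd_pos. Qed.

Lemma hh_upper x : hh x < x - theta * (mu - x) / lam.
Proof.
  unfold hh. destruct (Hpos x) as [P0 [P1 P2]]. pose proof (Hode x).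
  assert (0 < / 2 * sigma ^ 2 * ps2 x).
  { apply Rmult_lt_0_compat; auto. apply Rmult_lt_0_compat. lra. apply pow_lt; lra. }
  assert (theta * (mu - x) * ps1 x < lam * ps x) by lra.
  assert (theta * (mu - x) / lam < ps x / ps1 x); [|lra].
  apply Rmult_lt_reg_r with (lam * ps1 x). nra.
  replace (theta * (mu - x) / lam * (lam * ps1 x)) with (theta * (mu - x) * ps1 x) by (field; lra).
  replace (ps x / ps1 x * (lam * ps1 x)) with (lam * ps x) by (field; lra). lra.
Qed.

Lemma hd_formula x : hd x = 2 / sigma ^ 2 * (ps x / ps1 x) * (lam * (ps x / ps1 x) + theta * (x - mu)).
Proof.
  unfold hd. destruct (Hpos x) as [P0 [P1 P2]]. pose proof (Hode x).
  assert (E : ps2 x = 2 / sigma ^ 2 * (lam * ps x - theta * (mu - x) * ps1 x)).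
  { apply Rmult_eq_reg_l with (/ 2 * sigma ^ 2). 2: apply Rgt_not_eq; apply Rmult_lt_0_compat; [lra| apply pow_lt; lra].
    replace (/ 2 * sigma ^ 2 * (2 / sigma ^ 2 * (lam * ps x - theta * (mu - x) * ps1 x))) with
      (lam * ps x - theta * (mu - x) * ps1 x) by (field; lra). lra. }
  rewrite E. field. split; lra.
Qed.

Lemma hh_unbounded v : exists x, v < hh x.
Proof.
  apply NNPP. intro Hn.
  assert (Hle : forall x, hh x <= v) by (intros x; apply Rnot_lt_le; intro; apply Hn; exists x; auto).
  set (X := Rmax (mu + 1) (v + sigma ^ 2 / theta)).
  assert (HX1 : mu + 1 <= X) by apply Rmax_l.
  assert (HX2 : v + sigma ^ 2 / theta <= X) by apply Rmax_r.
  assert (Hs2 : 0 < sigma ^ 2) by (apply pow_lt; lra).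
  assert (Hbig : forall x, X <= x -> 2 <= hd x).
  { intros x Hx. rewrite hd_formula. set (r := ps x / ps1 x).
    assert (r >= x - v) by (pose proof (Hle x); unfold hh in *; fold r in H; lra).
    assert (Hr : sigma ^ 2 / theta <= r) by lra.
    assert (0 < r) by (unfold r; destruct (Hpos x) as [P0 [P1 P2]]; apply Rdiv_lt_0_compat; auto).
    assert (1 <= x - mu) by lra.
    assert (sigma ^ 2 <= theta * r).
    { apply Rmult_le_reg_r with (/ theta). apply Rinv_0_lt_compat; auto.
      replace (theta * r * / theta) with r by (field; lra). auto. }
    assert (theta * r <= theta * r * (x - mu)) by nra.
    assert (sigma ^ 2 <= lam * r * r + theta * r * (x - mu)) by nra.
    replace (2 / sigma ^ 2 * r * (lam * r + theta * (x - mu))) with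
      (2 / sigma ^ 2 * (lam * r * r + theta * r * (x - mu))) by ring.
    apply Rle_trans with (2 / sigma ^ 2 * sigma ^ 2). right; field; lra.
    apply Rmult_le_compat_l; auto. apply Rdiv_le_0_compat; lra. }
  set (b := X + Rabs (v - hh X) + 1).
  assert (hh X - X < hh b - b).
  { apply (incr_on (fun x => hh x - x) (fun x => hd x - 1)).
    intros x Hx. auto_derive. exists (hd x); apply hh_deriv.
    rewrite (Derive_R hh x _ (hh_deriv x)). ring.
    intros x Hx. pose proof (Hbig x ltac:(lra)). lra.
    unfold b. pose proof (Rabs_pos (v - hh X)). lra. }
  pose proof (Hle b). pose proof (Rle_abs (v - hh X)). unfold b in *. lra.
Qed.

Lemma hh_surj y : exists x, hh x = y.
Proof.
  destruct (hh_unbounded y) as [xh Hxh].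
  set (xl := Rmin (xh - 1) ((y + theta * mu / lam) / (1 + theta / lam) - 1)).
  assert (Hxl : hh xl < y).
  { pose proof (hh_upper xl).
    assert (xl <= (y + theta * mu / lam) / (1 + theta / lam) - 1) by apply Rmin_r.
    assert (xl - theta * (mu - xl) / lam = xl * (1 + theta / lam) - theta * mu / lam) by (field; lra).
    assert (xl * (1 + theta / lam) <= ((y + theta * mu / lam) / (1 + theta / lam) - 1) * (1 + theta / lam)).
    { apply Rmult_le_compat_r; auto. assert (0 < theta / lam) by (apply Rdiv_lt_0_compat; lra). lra. }
    replace (((y + theta * mu / lam) / (1 + theta / lam) - 1) * (1 + theta / lam)) with
      (y + theta * mu / lam - (1 + theta / lam)) in H2.
    assert (0 < theta / lam) by (apply Rdiv_lt_0_compat; lra). lra.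
    field. split. lra. assert (0 < theta / lam) by (apply Rdiv_lt_0_compat; lra). unfold Rdiv in H3. lra. }
  assert (xl < xh) by (unfold xl; pose proof (Rmin_l (xh - 1) ((y + theta * mu / lam) / (1 + theta / lam) - 1)); lra).
  destruct (IVT_cor (fun x => hh x - y) xl xh) as [z [Hz E]].
  apply continuity_minus. apply hh_cont. apply continuity_const. intros a b; auto.
  lra. assert (hh xl - y < 0) by lra. assert (0 < hh xh - y) by lra. nra.
  exists z. lra.
Qed.

Definition hinv y := epsilon (inhabits 0) (fun x => hh x = y).

Lemma hh_hinv y : hh (hinv y) = y.
Proof. unfold hinv. apply (epsilon_spec (inhabits 0) (fun x => hh x = y)). apply hh_surj. Qed.

Lemma hh_inj x y : hh x = hh y -> x = y.
Proof.
  intros E. destruct (Rtotal_order x y) as [H|[H|H]]; auto.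
  pose proof (hh_incr x y H); lra. pose proof (hh_incr y x H); lra.
Qed.

Lemma hinv_hh x : hinv (hh x) = x.
Proof. apply hh_inj. apply hh_hinv. Qed.

Lemma hinv_incr a b : a < b -> hinv a < hinv b.
Proof.
  intros H. destruct (Rlt_le_dec (hinv a) (hinv b)) as [H1|H1]; auto.
  exfalso. destruct H1 as [H1|H1].
  - pose proof (hh_incr _ _ H1) as H2. rewrite !hh_hinv in H2. lra.
  - pose proof (f_equal hh H1) as H2. rewrite !hh_hinv in H2. lra.
Qed.

Lemma hinv_cont y : continuity_pt hinv y.
Proof.
  intros eps He. set (x0 := hinv y).
  assert (A1 : hh (x0 - eps) < y) by (rewrite <- (hh_hinv y); apply hh_incr; unfold x0; lra).
  assert (A2 : y < hh (x0 + eps)) by (rewrite <- (hh_hinv y); apply hh_incr; unfold x0; lra).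
  exists (Rmin (y - hh (x0 - eps)) (hh (x0 + eps) - y)). split.
  apply Rmin_glb_lt; lra.
  intros y' [_ Hy']. simpl in *. unfold R_dist in *.
  pose proof (Rmin_l (y - hh (x0 - eps)) (hh (x0 + eps) - y)).
  pose proof (Rmin_r (y - hh (x0 - eps)) (hh (x0 + eps) - y)).
  assert (B1 : hh (x0 - eps) < y') by (revert Hy'; unfold Rabs; case Rcase_abs; intros; lra).
  assert (B2 : y' < hh (x0 + eps)) by (revert Hy'; unfold Rabs; case Rcase_abs; intros; lra).
  apply hinv_incr in B1. apply hinv_incr in B2. rewrite hinv_hh in B1, B2.
  fold x0. unfold Rabs; case Rcase_abs; intros; lra.
Qed.

Lemma hinv_deriv y : is_derive hinv y (/ hd (hinv y)).
Proof.
  apply Reals_deriv.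
  assert (Prf : forall a, hinv (y - 1) <= a <= hinv (y + 1) -> derivable_pt hh a).
  { intros a _. exists (hd a). apply deriv_Reals, hh_deriv. }
  assert (Hinc : hinv (y - 1) <= hinv y <= hinv (y + 1)).
  { split; left; apply hinv_incr; lra. }
  pose proof (derivable_pt_lim_recip_interv hh hinv (y - 1) (y + 1) y Prf (hinv_cont y)
     ltac:(lra) ltac:(lra) Hinc) as H.
  assert (Hd : derive_pt hh (hinv y) (Prf (hinv y) Hinc) = hd (hinv y)).
  { apply derive_pt_eq_0. apply deriv_Reals, hh_deriv. }
  rewrite Hd in H. replace (/ hd (hinv y)) with (1 / hd (hinv y)) by (unfold Rdiv; ring).
  apply H. intros x0 _. unfold comp, id. apply hh_hinv.
  pose proof (hd_pos (hinv y)). lra.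
Qed.

End HSec.


Lemma dw_local (D : R -> Prop) f g x l :
  (exists d, 0 < d /\ forall y, D y -> Rabs (y - x) < d -> f y = g y) -> D x ->
  deriv_within D g x l -> deriv_within D f x l.
Proof.
  intros [d [Hd He]] Dx H eps Heps. destruct (H eps Heps) as [a [Ha Hy]].
  exists (Rmin a d). split. apply Rmin_glb_lt; lra.
  intros y [[Dy Hne] Hyd]. simpl in Hyd. unfold R_dist in Hyd.
  pose proof (Rmin_l a d). pose proof (Rmin_r a d).
  rewrite (He y Dy), (He x Dx) by (rewrite ?Rminus_diag, ?Rabs_R0; lra).
  apply Hy. split. split; auto. simpl. unfold R_dist. lra.
Qed.

Lemma dw_either (D : R -> Prop) f g1 g2 x l :
  (forall y, D y -> f y = g1 y \/ f y = g2 y) -> f x = g1 x -> f x = g2 x ->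
  deriv_within D g1 x l -> deriv_within D g2 x l -> deriv_within D f x l.
Proof.
  intros Hf E1 E2 H1 H2 eps Heps.
  destruct (H1 eps Heps) as [a1 [Ha1 Hy1]]. destruct (H2 eps Heps) as [a2 [Ha2 Hy2]].
  exists (Rmin a1 a2). split. apply Rmin_glb_lt; lra.
  intros y [[Dy Hne] Hyd]. simpl in Hyd. unfold R_dist in Hyd.
  pose proof (Rmin_l a1 a2). pose proof (Rmin_r a1 a2).
  destruct (Hf y Dy) as [E|E]; rewrite E.
  rewrite E1. apply Hy1. split. split; auto. simpl; unfold R_dist; lra.
  rewrite E2. apply Hy2. split. split; auto. simpl; unfold R_dist; lra.
Qed.

Section WSec.
Variables theta sigma mu lam : R.
Variables Phi dPhi : R -> R.
Variables ps ps1 ps2 : R -> R.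
Hypothesis Htheta : 0 < theta.
Hypothesis Hsigma : 0 < sigma.
Hypothesis Hmu : 0 < mu.
Hypothesis Hlam : 0 < lam.
Hypothesis HdPhi : forall x, derivable_pt_lim Phi x (dPhi x).
Hypothesis HdPhic : forall x, continuity_pt dPhi x.
Hypothesis Hnoninc : forall x y, x <= y -> Phi y <= Phi x.
Hypothesis Hconv : forall x y t, x < y -> 0 < t < 1 ->
             Phi (t * x + (1 - t) * y) < t * Phi x + (1 - t) * Phi y.
Hypothesis HPhi1 : Phi 1 = 0.
Hypothesis Hk : forall c, 0 <= c <= 1 -> kfun theta lam dPhi c < 0.
Hypothesis Hd0 : forall x, is_derive ps x (ps1 x).
Hypothesis Hd1 : forall x, is_derive ps1 x (ps2 x).
Hypothesis Hc2 : forall x, continuity_pt ps2 x.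
Hypothesis Hpos : forall x, 0 < ps x /\ 0 < ps1 x /\ 0 < ps2 x.
Hypothesis Hode : forall x, / 2 * sigma ^ 2 * ps2 x + theta * (mu - x) * ps1 x = lam * ps x.

Let D := lam + theta.
Let zt := zeta theta lam Phi.
Let x0 := x0bar theta mu lam Phi.
Let kf := kfun theta lam dPhi.
Let hI := hinv ps ps1.

Definition gam c := hI (x0 c).
Definition dgam c := dx0 theta mu lam Phi dPhi c / hd ps ps1 ps2 (gam c).

Lemma W_hh_hinv y : hh ps ps1 (hI y) = y.
Proof. eapply (hh_hinv theta sigma mu lam); eauto. Qed.
Lemma W_hinv_hh x : hI (hh ps ps1 x) = x.
Proof. eapply (hinv_hh theta sigma mu lam); eauto. Qed.
Lemma W_hinv_incr a b : a < b -> hI a < hI b.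
Proof. eapply (hinv_incr theta sigma mu lam); eauto. Qed.
Lemma W_hinv_deriv y : is_derive hI y (/ hd ps ps1 ps2 (hI y)).
Proof. eapply (hinv_deriv theta sigma mu lam); eauto. Qed.
Lemma W_hd_pos x : 0 < hd ps ps1 ps2 x.
Proof. eapply hd_pos; eauto. Qed.
Lemma W_hd_cont x : continuity_pt (hd ps ps1 ps2) x.
Proof. eapply hd_cont; eauto. Qed.
Lemma W_zeta_neg c : I01 c -> zt c < 0.
Proof. intros H. eapply (zeta_neg theta lam Phi dPhi); eauto. Qed.
Lemma W_x0_deriv c : I01 c -> is_derive x0 c (dx0 theta mu lam Phi dPhi c).
Proof. intros H. apply x0bar_deriv; auto. pose proof (W_zeta_neg c H). unfold zt in *; lra. Qed.
Lemma W_dx0_neg c : I01 c -> dx0 theta mu lam Phi dPhi c < 0.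
Proof. intros H. eapply (dx0_neg theta mu lam Phi dPhi); eauto. Qed.

Lemma gam_eq c : ps (gam c) / ps1 (gam c) = gam c - x0 c.
Proof. pose proof (W_hh_hinv (x0 c)). unfold hh in H. unfold gam. lra. Qed.

Lemma gam_unique c x : ps x / ps1 x = x - x0 c -> x = gam c.
Proof.
  intros E. assert (hh ps ps1 x = x0 c) by (unfold hh; lra).
  unfold gam. rewrite <- H. symmetry. apply W_hinv_hh.
Qed.

Lemma gam_gt c : x0 c < gam c.
Proof.
  pose proof (gam_eq c). destruct (Hpos (gam c)) as [P0 [P1 _]].
  assert (0 < ps (gam c) / ps1 (gam c)) by (apply Rdiv_lt_0_compat; auto). lra.
Qed.

Lemma x0_decr c1 c2 : I01 c1 -> I01 c2 -> c1 < c2 -> x0 c2 < x0 c1.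
Proof.
  intros H1 H2 H12.
  assert (- x0 c1 < - x0 c2); [|lra].
  apply (incr_on (fun c => - x0 c) (fun c => - dx0 theta mu lam Phi dPhi c)); auto.
  intros x Hx. apply (is_derive_opp x0 x). apply W_x0_deriv. unfold I01 in *; lra.
  intros x Hx. pose proof (W_dx0_neg x ltac:(unfold I01 in *; lra)). lra.
Qed.

Lemma gam_decr c1 c2 : I01 c1 -> I01 c2 -> c1 < c2 -> gam c2 < gam c1.
Proof. intros. unfold gam. apply W_hinv_incr. apply x0_decr; auto. Qed.

Lemma gam_deriv c : I01 c -> is_derive gam c (dgam c).
Proof.
  intros H. unfold gam, dgam.
  pose proof (is_derive_comp hI x0 c _ _ (W_hinv_deriv (x0 c)) (W_x0_deriv c H)) as E.
  simpl in E. unfold scal in E; simpl in E. unfold mult in E; simpl in E.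
  unfold Rdiv. exact E.
Qed.

Lemma gam_cont c : I01 c -> continuity_pt gam c.
Proof. intros H. eapply cont_of_derive. apply gam_deriv; auto. Qed.

Lemma dgam_neg c : I01 c -> dgam c < 0.
Proof.
  intros H. unfold dgam. pose proof (W_dx0_neg c H). pose proof (W_hd_pos (gam c)).
  unfold Rdiv. assert (0 < / hd ps ps1 ps2 (gam c)) by (apply Rinv_0_lt_compat; auto). nra.
Qed.

Lemma Phi_cont c : continuity_pt Phi c.
Proof. eapply cont_of_deriv. apply HdPhi. Qed.
Lemma zt_cont c : continuity_pt zt c.
Proof. eapply cont_of_derive. apply zeta_deriv; auto. Qed.
Lemma kf_cont c : continuity_pt kf c.
Proof.
  unfold kf, kfun. apply (continuity_pt_plus (fun _ => lam + theta) (fun c => lam * dPhi c)).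
  apply continuity_pt_const. intros a b; auto.
  apply (continuity_pt_mult (fun _ => lam) dPhi). apply continuity_pt_const. intros a b; auto. auto.
Qed.

Lemma dx0_cont c : I01 c -> continuity_pt (dx0 theta mu lam Phi dPhi) c.
Proof.
  intros H. pose proof (W_zeta_neg c H). unfold dx0.
  apply (continuity_pt_div (fun c => theta * mu * (dPhi c * zt c + kf c * Phi c)) (fun c => zt c ^ 2)).
  - apply (continuity_pt_mult (fun _ => theta * mu) (fun c => dPhi c * zt c + kf c * Phi c)).
    apply continuity_pt_const. intros a b; auto.
    apply (continuity_pt_plus (fun c => dPhi c * zt c) (fun c => kf c * Phi c)).
    apply (continuity_pt_mult dPhi zt); auto. apply zt_cont.
    apply (continuity_pt_mult kf Phi). apply kf_cont. apply Phi_cont.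
  - apply (continuity_pt_mult zt (fun c => zt c ^ 1)). apply zt_cont.
    apply (continuity_pt_mult zt (fun _ => 1)). apply zt_cont. apply continuity_pt_const. intros a b; auto.
  - apply pow_nonzero. unfold zt in *. lra.
Qed.

Lemma hdg_cont c : I01 c -> continuity_pt (fun c => hd ps ps1 ps2 (gam c)) c.
Proof.
  intros H. apply (continuity_pt_comp gam (hd ps ps1 ps2)). apply gam_cont; auto. apply W_hd_cont.
Qed.

Lemma dgam_cont c : I01 c -> continuity_pt dgam c.
Proof.
  intros H. unfold dgam. apply (continuity_pt_div (dx0 theta mu lam Phi dPhi) (fun c => hd ps ps1 ps2 (gam c))).
  apply dx0_cont; auto. apply hdg_cont; auto. pose proof (W_hd_pos (gam c)). lra.
Qed.

Lemma ps_cont' x : continuity_pt ps x.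
Proof. eapply cont_of_derive. apply Hd0. Qed.
Lemma ps1_cont' x : continuity_pt ps1 x.
Proof. eapply cont_of_derive. apply Hd1. Qed.

Lemma ps1_incr x y : x < y -> ps1 x < ps1 y.
Proof. intros H. apply (incr_on ps1 ps2); auto. intros z _; apply Hpos. Qed.

Definition B c := zt c / (D * ps1 (gam c)).
Definition dB c := (- kf c * ps1 (gam c) - zt c * ps2 (gam c) * dgam c) / (D * ps1 (gam c) ^ 2).
Definition W1 x c := B c * ps x + lam * Phi c * ((x - mu) / D + mu / lam).
Definition W1x x c := B c * ps1 x + lam * Phi c / D.
Definition W1xx x c := B c * ps2 x.
Definition W1c x c := dB c * ps x + lam * dPhi c * ((x - mu) / D + mu / lam).
Definition W1cx x c := dB c * ps1 x + lam * dPhi c / D.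

Lemma D_pos : 0 < D. Proof. unfold D; lra. Qed.

Lemma B_deriv c : I01 c -> is_derive B c (dB c).
Proof.
  intros H. unfold B, dB. pose proof D_pos. destruct (Hpos (gam c)) as [P0 [P1 P2]].
  assert (E1 := zeta_deriv theta lam Phi dPhi HdPhi c). fold zt kf in E1.
  assert (E2 := gam_deriv c H).
  assert (E3 : is_derive (fun c => ps1 (gam c)) c (ps2 (gam c) * dgam c)).
  { pose proof (is_derive_comp ps1 gam c _ _ (Hd1 (gam c)) E2) as E. simpl in E.
    unfold scal in E; simpl in E; unfold mult in E; simpl in E. rewrite Rmult_comm. exact E. }
  change (is_derive (fun c => zt c * / (D * ps1 (gam c))) c
    ((- kf c * ps1 (gam c) - zt c * ps2 (gam c) * dgam c) / (D * ps1 (gam c) ^ 2))).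
  assert (E4 : is_derive (fun c => / (D * ps1 (gam c))) c (- (D * (ps2 (gam c) * dgam c)) / (D * ps1 (gam c)) ^ 2)).
  { apply (is_derive_inv (fun c => D * ps1 (gam c))). apply (is_derive_scal (fun c => ps1 (gam c)) c D). auto. nra. }
  pose proof (is_derive_mult zt (fun c => / (D * ps1 (gam c))) c _ _ E1 E4) as E5.
  simpl in E5. unfold mult, plus in E5; simpl in E5.
  replace ((- kf c * ps1 (gam c) - zt c * ps2 (gam c) * dgam c) / (D * ps1 (gam c) ^ 2)) with
    (- kf c * / (D * ps1 (gam c)) + zt c * (- (D * (ps2 (gam c) * dgam c)) / (D * ps1 (gam c)) ^ 2)).
  apply E5. intros; apply Rmult_comm.
  field. lra.
Qed.

Lemma B_cont c : I01 c -> continuity_pt B c.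
Proof. intros H. eapply cont_of_derive. apply B_deriv; auto. Qed.

Lemma dB_cont c : I01 c -> continuity_pt dB c.
Proof.
  intros H. pose proof D_pos. destruct (Hpos (gam c)) as [P0 [P1 P2]]. unfold dB.
  assert (C1 : continuity_pt (fun c => ps1 (gam c)) c).
  { apply (continuity_pt_comp gam ps1). apply gam_cont; auto. apply ps1_cont'. }
  assert (C2 : continuity_pt (fun c => ps2 (gam c)) c).
  { apply (continuity_pt_comp gam ps2). apply gam_cont; auto. auto. }
  apply (continuity_pt_div (fun c => - kf c * ps1 (gam c) - zt c * ps2 (gam c) * dgam c)
    (fun c => D * ps1 (gam c) ^ 2)).
  - apply (continuity_pt_minus (fun c => - kf c * ps1 (gam c)) (fun c => zt c * ps2 (gam c) * dgam c)).
    + apply (continuity_pt_mult (fun c => - kf c) (fun c => ps1 (gam c))); auto.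
      apply (continuity_pt_opp kf). apply kf_cont.
    + apply (continuity_pt_mult (fun c => zt c * ps2 (gam c)) dgam).
      apply (continuity_pt_mult zt (fun c => ps2 (gam c))); auto. apply zt_cont.
      apply dgam_cont; auto.
  - apply (continuity_pt_mult (fun _ => D) (fun c => ps1 (gam c) ^ 2)).
    apply continuity_pt_const. intros a b; auto.
    apply (continuity_pt_mult (fun c => ps1 (gam c)) (fun c => ps1 (gam c) ^ 1)); auto.
    apply (continuity_pt_mult (fun c => ps1 (gam c)) (fun _ => 1)); auto.
    apply continuity_pt_const. intros a b; auto.
  - assert (0 < ps1 (gam c) ^ 2) by (apply pow_lt; auto). nra.
Qed.

Definition Wg x c :=
  if Rle_dec 1 c then 0
  else if Rlt_dec x (gam c) then
    ps x / ps (gam c) *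
      (gam c * (1 - c)
       - lam * Phi c * ((gam c - mu) / (lam + theta) + mu / lam))
    + lam * Phi c * ((x - mu) / (lam + theta) + mu / lam)
  else x * (1 - c).

Lemma ps_gam c : ps (gam c) = ps1 (gam c) * (gam c - theta * mu * Phi c / zt c).
Proof.
  pose proof (gam_eq c). destruct (Hpos (gam c)) as [P0 [P1 _]]. unfold x0, x0bar in H. fold zt in H.
  rewrite <- H. field. lra.
Qed.

Lemma gx0_pos c : 0 < gam c - theta * mu * Phi c / zt c.
Proof. pose proof (gam_gt c). unfold x0, x0bar in H. fold zt in H. lra. Qed.

Lemma gz_neg c : I01 c -> gam c * zt c - theta * mu * Phi c < 0.
Proof.
  intros H. pose proof (W_zeta_neg c H). pose proof (gx0_pos c).
  replace (gam c * zt c - theta * mu * Phi c) with (zt c * (gam c - theta * mu * Phi c / zt c)) by (field; lra).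
  nra.
Qed.

Lemma Wg_eq1 x c : I01 c -> x < gam c -> Wg x c = W1 x c.
Proof.
  intros H Hx. unfold Wg. destruct (Rle_dec 1 c). unfold I01 in H; lra.
  destruct (Rlt_dec x (gam c)); [|lra].
  unfold W1, B. pose proof (W_zeta_neg c H). pose proof (gx0_pos c). pose proof (gz_neg c H). pose proof D_pos.
  destruct (Hpos (gam c)) as [P0 [P1 _]]. rewrite ps_gam. unfold D in *.
  unfold zt, zeta in *. field. repeat split; lra.
Qed.

Lemma Wg_eq2 x c : I01 c -> gam c <= x -> Wg x c = x * (1 - c).
Proof.
  intros H Hx. unfold Wg. destruct (Rle_dec 1 c). unfold I01 in H; lra.
  destruct (Rlt_dec x (gam c)); [lra|auto].
Qed.

Lemma W1_at_gam c : I01 c -> W1 (gam c) c = gam c * (1 - c).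
Proof.
  intros H. unfold W1, B. pose proof (W_zeta_neg c H). pose proof (gx0_pos c). pose proof (gz_neg c H). pose proof D_pos.
  destruct (Hpos (gam c)) as [P0 [P1 _]]. rewrite ps_gam. unfold D in *.
  unfold zt, zeta in *. field. repeat split; lra.
Qed.

Lemma W1x_at_gam c : I01 c -> W1x (gam c) c = 1 - c.
Proof.
  intros H. unfold W1x, B. pose proof D_pos.
  destruct (Hpos (gam c)) as [P0 [P1 _]]. unfold D in *.
  unfold zt, zeta in *. field. repeat split; lra.
Qed.

Lemma W1c_at_gam c : I01 c -> W1c (gam c) c = - gam c.
Proof.
  intros H. unfold W1c, dB, dgam, hd, dx0. pose proof (W_zeta_neg c H). pose proof (gx0_pos c). pose proof (gz_neg c H). pose proof D_pos.
  destruct (Hpos (gam c)) as [P0 [P1 P2]]. rewrite ps_gam. fold zt kf. unfold kf, kfun. unfold D in *.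
  field. repeat split; lra.
Qed.

Lemma W1cx_at_gam c : I01 c -> W1cx (gam c) c + 1 < 0.
Proof.
  intros H. pose proof (W_zeta_neg c H). pose proof D_pos. pose proof (dgam_neg c H).
  destruct (Hpos (gam c)) as [P0 [P1 P2]].
  assert (E : W1cx (gam c) c + 1 = - (zt c * dgam c) * (ps2 (gam c) / (D * ps1 (gam c)))).
  { unfold W1cx, dB, kf, kfun. unfold D in *. field. split; lra. }
  rewrite E. assert (0 < zt c * dgam c) by nra.
  assert (0 < ps2 (gam c) / (D * ps1 (gam c))) by (apply Rdiv_lt_0_compat; nra). nra.
Qed.

Lemma W1_dx x c : is_derive (fun y => W1 y c) x (W1x x c).
Proof.
  unfold W1, W1x. pose proof D_pos. pose proof (Hd0 x). auto_derive.
  eexists; eauto. rewrite (Derive_R ps x _ (Hd0 x)). field; repeat split; lra.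
Qed.

Lemma W1x_dx x c : is_derive (fun y => W1x y c) x (W1xx x c).
Proof.
  unfold W1x, W1xx. auto_derive. eexists; eauto. rewrite (Derive_R ps1 x _ (Hd1 x)). ring.
Qed.

Lemma W1c_dx x c : is_derive (fun y => W1c y c) x (W1cx x c).
Proof.
  unfold W1c, W1cx. pose proof D_pos. auto_derive. eexists; eauto. rewrite (Derive_R ps x _ (Hd0 x)). field; repeat split; lra.
Qed.

Lemma W1_dc x c : I01 c -> is_derive (fun d => W1 x d) c (W1c x c).
Proof.
  intros H. unfold W1, W1c. pose proof (B_deriv c H). pose proof (Reals_deriv _ _ _ (HdPhi c)).
  auto_derive. split; [eexists; eauto | split; [eexists; eauto | auto]].
  rewrite (Derive_R B c _ H0), (Derive_R Phi c _ H1). ring.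
Qed.

Lemma gam_near_lt x c : I01 c -> x < gam c -> exists d, 0 < d /\ forall e, Rabs (e - c) < d -> x < gam e.
Proof.
  intros H Hx. destruct (gam_cont c H (gam c - x) ltac:(lra)) as [a [Ha Hy]].
  exists a. split; auto. intros e He. destruct (Req_dec e c) as [->|Hne]; auto.
  assert (K : R_dist (gam e) (gam c) < gam c - x).
  { apply Hy. split. split; auto. constructor. auto. }
  unfold R_dist in K. revert K; unfold Rabs; case Rcase_abs; intros; lra.
Qed.

Lemma gam_near_gt x c : I01 c -> gam c < x -> exists d, 0 < d /\ forall e, Rabs (e - c) < d -> gam e < x.
Proof.
  intros H Hx. destruct (gam_cont c H (x - gam c) ltac:(lra)) as [a [Ha Hy]].
  exists a. split; auto. intros e He. destruct (Req_dec e c) as [->|Hne]; auto.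
  assert (K : R_dist (gam e) (gam c) < x - gam c).
  { apply Hy. split. split; auto. constructor. auto. }
  unfold R_dist in K. revert K; unfold Rabs; case Rcase_abs; intros; lra.
Qed.

Definition Wx x c := if Rlt_dec x (gam c) then W1x x c else 1 - c.
Definition Wxx x c := if Rlt_dec x (gam c) then W1xx x c else 0.
Definition Wc x c := if Rlt_dec x (gam c) then W1c x c else - x.
Definition Wcx x c := if Rlt_dec x (gam c) then W1cx x c else -1.

Lemma M_Wx x c : I01 c -> derivable_pt_lim (fun y => Wg y c) x (Wx x c).
Proof.
  intros H. unfold Wx. destruct (Rlt_dec x (gam c)) as [Hl|Hl].
  - apply (deriv_local _ (fun y => W1 y c)).
    exists (gam c - x). split. lra. intros y Hy. apply Wg_eq1; auto.
    revert Hy; unfold Rabs; case Rcase_abs; intros; lra.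
    apply deriv_Reals, W1_dx.
  - destruct (Rle_lt_or_eq_dec _ _ (Rnot_lt_le _ _ Hl)) as [Hg|Hg].
    + apply (deriv_local _ (fun y => y * (1 - c))).
      exists (x - gam c). split. lra. intros y Hy. apply Wg_eq2; auto.
      revert Hy; unfold Rabs; case Rcase_abs; intros; lra.
      apply deriv_Reals. auto_derive; auto; try ring.
    + subst x. apply (deriv_either _ (fun y => W1 y c) (fun y => y * (1 - c))).
      intros y. destruct (Rlt_dec y (gam c)). left; apply Wg_eq1; auto. right; apply Wg_eq2; auto; lra.
      rewrite Wg_eq2, W1_at_gam; auto; lra. apply Wg_eq2; auto; lra.
      rewrite <- (W1x_at_gam c H). apply deriv_Reals, W1_dx.
      apply deriv_Reals. auto_derive; auto; try ring.
Qed.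

Lemma M_Wxx x c : I01 c -> x <> gam c -> derivable_pt_lim (fun y => Wx y c) x (Wxx x c).
Proof.
  intros H Hne. unfold Wxx. destruct (Rlt_dec x (gam c)) as [Hl|Hl].
  - apply (deriv_local _ (fun y => W1x y c)).
    exists (gam c - x). split. lra. intros y Hy. unfold Wx. destruct (Rlt_dec y (gam c)); auto.
    revert Hy; unfold Rabs; case Rcase_abs; intros; lra.
    apply deriv_Reals, W1x_dx.
  - assert (Hg : gam c < x) by lra.
    apply (deriv_local _ (fun y => 1 - c)).
    exists (x - gam c). split. lra. intros y Hy. unfold Wx. destruct (Rlt_dec y (gam c)); auto.
    revert Hy; unfold Rabs; case Rcase_abs; intros; lra.
    apply deriv_Reals. auto_derive; auto; try ring.
Qed.

Lemma M_Wc x c : I01 c -> deriv_within I01 (fun d => Wg x d) c (Wc x c).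
Proof.
  intros H. unfold Wc. destruct (Rlt_dec x (gam c)) as [Hl|Hl].
  - destruct (gam_near_lt x c H Hl) as [d [Hd Hn]].
    apply (dw_local _ _ (fun e => W1 x e)); auto.
    exists d. split; auto. intros e He Hed. apply Wg_eq1; auto.
    apply deriv_within_of, deriv_Reals, W1_dc; auto.
  - destruct (Rle_lt_or_eq_dec _ _ (Rnot_lt_le _ _ Hl)) as [Hg|Hg].
    + destruct (gam_near_gt x c H Hg) as [d [Hd Hn]].
      apply (dw_local _ _ (fun e => x * (1 - e))); auto.
      exists d. split; auto. intros e He Hed. apply Wg_eq2; auto. left; auto.
      apply deriv_within_of, deriv_Reals. auto_derive; auto; try ring.
    + subst x. apply (dw_either _ _ (fun e => W1 (gam c) e) (fun e => gam c * (1 - e))).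
      intros e He. destruct (Rlt_dec (gam c) (gam e)). left; apply Wg_eq1; auto. right; apply Wg_eq2; auto; lra.
      rewrite Wg_eq2, W1_at_gam; auto; lra. apply Wg_eq2; auto; lra.
      rewrite <- (W1c_at_gam c H). apply deriv_within_of, deriv_Reals, W1_dc; auto.
      apply deriv_within_of, deriv_Reals. auto_derive; auto; try ring.
Qed.

Lemma M_Wcx x c : I01 c -> x <> gam c -> derivable_pt_lim (fun y => Wc y c) x (Wcx x c).
Proof.
  intros H Hne. unfold Wcx. destruct (Rlt_dec x (gam c)) as [Hl|Hl].
  - apply (deriv_local _ (fun y => W1c y c)).
    exists (gam c - x). split. lra. intros y Hy. unfold Wc. destruct (Rlt_dec y (gam c)); auto.
    revert Hy; unfold Rabs; case Rcase_abs; intros; lra.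
    apply deriv_Reals, W1c_dx.
  - assert (Hg : gam c < x) by lra.
    apply (deriv_local _ (fun y => - y)).
    exists (x - gam c). split. lra. intros y Hy. unfold Wc. destruct (Rlt_dec y (gam c)); auto.
    revert Hy; unfold Rabs; case Rcase_abs; intros; lra.
    apply deriv_Reals. auto_derive; auto.
Qed.

Lemma M_ode x c : I01 c -> x < gam c ->
  / 2 * sigma ^ 2 * Wxx x c + theta * (mu - x) * Wx x c - lam * Wg x c = - lam * x * Phi c.
Proof.
  intros H Hx. rewrite Wg_eq1; auto. unfold Wx, Wxx. destruct (Rlt_dec x (gam c)); [|lra].
  unfold W1, W1x, W1xx. pose proof (Hode x). pose proof D_pos.
  transitivity (B c * (/ 2 * sigma ^ 2 * ps2 x + theta * (mu - x) * ps1 x - lam * ps x) - lam * x * Phi c).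
  unfold D in *. field. lra. rewrite H0. ring.
Qed.

Lemma M_Wc_ge x c : I01 c -> Wc x c >= - x.
Proof.
  intros H. unfold Wc. destruct (Rlt_dec x (gam c)) as [Hl|Hl]; [|lra].
  assert (Hneg : forall y, y <= gam c -> W1cx y c + 1 < 0).
  { intros y Hy. pose proof (W1cx_at_gam c H). unfold W1cx in *.
    pose proof (dPhi_bound theta lam dPhi Hk c ltac:(unfold I01 in H; lra)). pose proof D_pos.
    assert (lam * dPhi c / D + 1 < 0).
    { apply Rmult_lt_reg_r with D; auto. unfold Rdiv. rewrite Rmult_plus_distr_r, Rmult_assoc, Rinv_l by lra.
      unfold D in *. lra. }
    destruct (Rle_lt_dec (dB c) 0) as [Hb|Hb].
    - destruct (Hpos y) as [_ [P1 _]]. nra.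
    - destruct Hy as [Hy|Hy]. pose proof (ps1_incr y (gam c) Hy). nra. subst y. auto. }
  assert (- (W1c x c + x) < - (W1c (gam c) c + gam c)).
  { apply (incr_on (fun y => - (W1c y c + y)) (fun y => - (W1cx y c + 1))); auto.
    intros y _. apply Reals_deriv.
    apply (derivable_pt_lim_opp (fun y => W1c y c + y)).
    apply (derivable_pt_lim_plus (fun y => W1c y c) (fun y => y)). apply deriv_Reals, W1c_dx.
    apply derivable_pt_lim_id.
    intros y Hy. pose proof (Hneg y ltac:(lra)). lra. }
  rewrite W1c_at_gam in H0; auto. lra.
Qed.

Lemma M_left_lim c : I01 c -> exists L,
  limit1_in (fun y => Wcx y c) (fun y => y < gam c) L (gam c) /\ L < -1.
Proof.
  intros H. exists (W1cx (gam c) c). split.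
  - assert (Hc : continuity_pt (fun y => W1cx y c) (gam c)).
    { eapply cont_of_derive. unfold W1cx. auto_derive. eexists; apply Hd1. reflexivity. }
    pose proof (limit_of_cont (fun y => y < gam c) _ _ Hc) as L.
    intros eps He. destruct (L eps He) as [a [Ha Hy]]. exists a. split; auto.
    intros y [Dy Hd]. unfold Wcx. destruct (Rlt_dec y (gam c)); [|lra]. apply Hy; auto.
  - pose proof (W1cx_at_gam c H). lra.
Qed.

Lemma M_bound a b c1 c2 : 0 < c1 -> c2 < 1 ->
  exists M, forall x c, a <= x <= b -> c1 <= c <= c2 ->
    Rabs (Wx x c) <= M /\ Rabs (Wc x c) <= M /\ (x <> gam c -> Rabs (Wxx x c) <= M).
Proof.
  intros H1 H2.
  assert (HI : forall c, c1 <= c <= c2 -> I01 c) by (intros; unfold I01; lra).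
  destruct (cont_bound B c1 c2) as [MB HB]. intros; apply B_cont; auto.
  destruct (cont_bound dB c1 c2) as [MdB HdB]. intros; apply dB_cont; auto.
  destruct (cont_bound Phi c1 c2) as [MP HP]. intros; apply Phi_cont.
  destruct (cont_bound dPhi c1 c2) as [MdP HdP]. intros; auto.
  destruct (cont_bound ps a b) as [M0 H0]. intros; apply ps_cont'.
  destruct (cont_bound ps1 a b) as [M1 HM1]. intros; apply ps1_cont'.
  destruct (cont_bound ps2 a b) as [M2 HM2]. intros; auto.
  pose proof D_pos.
  set (X := Rabs a + Rabs b).
  set (Q := (X + mu) / D + mu / lam).
  assert (HQ : forall x, a <= x <= b -> Rabs ((x - mu) / D + mu / lam) <= Q).
  { intros x Hx. unfold Q. eapply Rle_trans. apply Rabs_triang.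
    rewrite (Rabs_right (mu / lam)) by (left; apply Rdiv_lt_0_compat; lra).
    unfold Rdiv. rewrite Rabs_mult, (Rabs_right (/ D)) by (left; apply Rinv_0_lt_compat; lra).
    apply Rplus_le_compat_r. apply Rmult_le_compat_r. left; apply Rinv_0_lt_compat; lra.
    eapply Rle_trans. apply Rabs_triang. rewrite Rabs_Ropp, (Rabs_right mu) by lra.
    apply Rplus_le_compat_r. unfold X. pose proof (Rabs_pos a). pose proof (Rabs_pos b).
    unfold Rabs at 1; case Rcase_abs; intros; unfold Rabs in *; repeat case Rcase_abs in *; intros; lra. }
  assert (HX : forall x, a <= x <= b -> Rabs x <= X).
  { intros x Hx. unfold X. pose proof (Rabs_pos a). pose proof (Rabs_pos b).
    unfold Rabs; repeat case Rcase_abs; intros; lra. }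
  assert (Hpr : forall u v U V, Rabs u <= U -> Rabs v <= V -> Rabs (u * v) <= U * V).
  { intros u v U V Hu Hv. rewrite Rabs_mult. apply Rmult_le_compat; auto; apply Rabs_pos. }
  exists (MB * M1 + lam * MP / D + 1 + (MdB * M0 + lam * MdP * Q + X) + MB * M2 + 1).
  assert (Pos : forall u v, Rabs u <= v -> 0 <= v) by (intros u v Hu; eapply Rle_trans; [apply Rabs_pos|apply Hu]).
  intros x c Hx Hc.
  pose proof (HB c Hc). pose proof (HdB c Hc). pose proof (HP c Hc). pose proof (HdP c Hc).
  pose proof (H0 x Hx). pose proof (HM1 x Hx). pose proof (HM2 x Hx). pose proof (HQ x Hx). pose proof (HX x Hx).
  assert (T1 : Rabs (W1x x c) <= MB * M1 + lam * MP / D).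
  { unfold W1x. eapply Rle_trans. apply Rabs_triang. apply Rplus_le_compat. apply Hpr; auto.
    unfold Rdiv. rewrite !Rabs_mult, (Rabs_right lam), (Rabs_right (/ D)) by (left; try apply Rinv_0_lt_compat; lra).
    apply Rmult_le_compat_r. left; apply Rinv_0_lt_compat; lra. apply Rmult_le_compat_l; lra. }
  assert (T2 : Rabs (W1c x c) <= MdB * M0 + lam * MdP * Q).
  { unfold W1c. eapply Rle_trans. apply Rabs_triang. apply Rplus_le_compat. apply Hpr; auto.
    apply Hpr; auto. rewrite Rabs_mult, (Rabs_right lam) by lra. apply Rmult_le_compat_l; lra. }
  assert (T3 : Rabs (W1xx x c) <= MB * M2) by (unfold W1xx; apply Hpr; auto).
  pose proof (Pos _ _ H3). pose proof (Pos _ _ H4). pose proof (Pos _ _ H5). pose proof (Pos _ _ H6).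
  pose proof (Pos _ _ H7). pose proof (Pos _ _ H8). pose proof (Pos _ _ H9). pose proof (Pos _ _ H10).
  pose proof (Pos _ _ H11).
  assert (0 <= MB * M1) by nra. assert (0 <= MB * M2) by nra. assert (0 <= MdB * M0) by nra.
  assert (0 <= lam * MP / D) by (apply Rdiv_le_0_compat; nra). assert (0 <= lam * MdP * Q) by (apply Rmult_le_pos; nra).
  assert (Rabs (1 - c) <= 1) by (unfold Rabs; case Rcase_abs; intros; lra).
  unfold Wx, Wc, Wxx. destruct (Rlt_dec x (gam c)); repeat split; intros; try lra.
  rewrite Rabs_Ropp; lra. rewrite Rabs_R0; lra.
Qed.

Lemma main_abstract :
    (forall c, I01 c ->
       ps (gam c) / ps1 (gam c) = gam c - x0bar theta mu lam Phi c
       /\ (forall x, ps x / ps1 x = x - x0bar theta mu lam Phi c -> x = gam c)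
       /\ x0bar theta mu lam Phi c < gam c)
    /\ (forall c1 c2, I01 c1 -> I01 c2 -> c1 < c2 -> gam c2 < gam c1)
    /\ (exists dgamma : R -> R,
          (forall c, I01 c -> deriv_within I01 gam c (dgamma c))
          /\ (forall c, I01 c -> limit1_in dgamma I01 (dgamma c) c))
    /\ (let W := Wg in
        exists Wx Wxx Wc Wcx : R -> R -> R,
          (forall x c, I01 c -> derivable_pt_lim (fun y => W y c) x (Wx x c))
          /\ (forall x c, I01 c -> x <> gam c ->
                derivable_pt_lim (fun y => Wx y c) x (Wxx x c))
          /\ (forall x c, I01 c -> deriv_within I01 (fun d => W x d) c (Wc x c))
          /\ (forall a b c1 c2, 0 < c1 -> c2 < 1 ->
                exists M, forall x c, a <= x <= b -> c1 <= c <= c2 ->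
                  Rabs (Wx x c) <= M /\ Rabs (Wc x c) <= M
                  /\ (x <> gam c -> Rabs (Wxx x c) <= M))
          /\ (forall x c, I01 c -> x < gam c ->
                / 2 * sigma ^ 2 * Wxx x c + theta * (mu - x) * Wx x c - lam * W x c
                  = - lam * x * Phi c)
          /\ (forall x c, I01 c -> Wc x c >= - x)
          /\ (forall x c, I01 c -> x >= gam c -> W x c = x * (1 - c))
          /\ (forall c, I01 c -> Wx (gam c) c = 1 - c)
          /\ (forall c, I01 c -> Wc (gam c) c = - gam c)
          /\ (forall x c, I01 c -> x <> gam c ->
                derivable_pt_lim (fun y => Wc y c) x (Wcx x c))
          /\ (forall x c, I01 c -> x > gam c -> Wcx x c = -1)
          /\ (forall c, I01 c -> exists L,
                limit1_in (fun y => Wcx y c) (fun y => y < gam c) L (gam c)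
                /\ L < -1)).
Proof.
  split; [|split; [|split]].
  - intros c H. split; [apply gam_eq|split; [apply gam_unique|apply gam_gt]].
  - apply gam_decr.
  - exists dgam. split.
    + intros c H. apply deriv_within_of, deriv_Reals, gam_deriv; auto.
    + intros c H. apply limit_of_cont, dgam_cont; auto.
  - intros W. exists Wx, Wxx, Wc, Wcx. unfold W.
    split. exact M_Wx.
    split. exact M_Wxx.
    split. exact M_Wc.
    split. exact M_bound.
    split. exact M_ode.
    split. exact M_Wc_ge.
    split. intros x c H Hx. apply Wg_eq2; auto; lra.
    split. intros c H. unfold Wx. destruct (Rlt_dec (gam c) (gam c)); [lra|auto].
    split. intros c H. unfold Wc. destruct (Rlt_dec (gam c) (gam c)); [lra|auto].
    split. exact M_Wcx.
    split. intros x c H Hx. unfold Wcx. destruct (Rlt_dec x (gam c)); [lra|auto].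
    exact M_left_lim.
Qed.

End WSec.


Theorem mainTheorem10
  (theta sigma mu lam : R) (Phi dPhi d2Phi : R -> R)
  (Htheta : 0 < theta) (Hsigma : 0 < sigma) (Hmu : 0 < mu) (Hlam : 0 < lam)
  (HdPhi : forall x, derivable_pt_lim Phi x (dPhi x))
  (Hd2Phi : forall x, derivable_pt_lim dPhi x (d2Phi x))
  (Hd2cont : continuity d2Phi)
  (Hnoninc : forall x y, x <= y -> Phi y <= Phi x)
  (Hconv : forall x y t, x < y -> 0 < t < 1 ->
             Phi (t * x + (1 - t) * y) < t * Phi x + (1 - t) * Phi y)
  (HPhi1 : Phi 1 = 0)
  (Hk : forall c, 0 <= c <= 1 -> kfun theta lam dPhi c < 0) :
  exists gamma : R -> R,
    (forall c, I01 c ->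
       psi theta sigma mu lam (gamma c) / Deriv (psi theta sigma mu lam) (gamma c)
         = gamma c - x0bar theta mu lam Phi c
       /\ (forall x, psi theta sigma mu lam x / Deriv (psi theta sigma mu lam) x
                       = x - x0bar theta mu lam Phi c -> x = gamma c)
       /\ x0bar theta mu lam Phi c < gamma c)
    /\ (forall c1 c2, I01 c1 -> I01 c2 -> c1 < c2 -> gamma c2 < gamma c1)
    /\ (exists dgamma : R -> R,
          (forall c, I01 c -> deriv_within I01 gamma c (dgamma c))
          /\ (forall c, I01 c -> limit1_in dgamma I01 (dgamma c) c))
    /\ (let W := Wfun theta sigma mu lam Phi gamma in
        exists Wx Wxx Wc Wcx : R -> R -> R,
          (forall x c, I01 c -> derivable_pt_lim (fun y => W y c) x (Wx x c))
          /\ (forall x c, I01 c -> x <> gamma c ->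
                derivable_pt_lim (fun y => Wx y c) x (Wxx x c))
          /\ (forall x c, I01 c -> deriv_within I01 (fun d => W x d) c (Wc x c))
          /\ (forall a b c1 c2, 0 < c1 -> c2 < 1 ->
                exists M, forall x c, a <= x <= b -> c1 <= c <= c2 ->
                  Rabs (Wx x c) <= M /\ Rabs (Wc x c) <= M
                  /\ (x <> gamma c -> Rabs (Wxx x c) <= M))
          /\ (forall x c, I01 c -> x < gamma c ->
                / 2 * sigma ^ 2 * Wxx x c + theta * (mu - x) * Wx x c - lam * W x c
                  = - lam * x * Phi c)
          /\ (forall x c, I01 c -> Wc x c >= - x)
          /\ (forall x c, I01 c -> x >= gamma c -> W x c = x * (1 - c))
          /\ (forall c, I01 c -> Wx (gamma c) c = 1 - c)
          /\ (forall c, I01 c -> Wc (gamma c) c = - gamma c)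
          /\ (forall x c, I01 c -> x <> gamma c ->
                derivable_pt_lim (fun y => Wc y c) x (Wcx x c))
          /\ (forall x c, I01 c -> x > gamma c -> Wcx x c = -1)
          /\ (forall c, I01 c -> exists L,
                limit1_in (fun y => Wcx y c) (fun y => y < gamma c) L (gamma c)
                /\ L < -1)).
Proof.
  set (PS := psi theta sigma mu lam).
  set (PS1 := ps1 theta sigma mu lam). set (PS2 := ps2 theta sigma mu lam).
  assert (Epsi : PS = ps0 theta sigma mu lam).
  { apply functional_extensionality; intro x. unfold PS. apply psi_eq; auto. }
  assert (Hd0 : forall x, is_derive PS x (PS1 x)).
  { intros x. rewrite Epsi. apply Reals_deriv, ps0_deriv; auto. }
  assert (Hd1 : forall x, is_derive PS1 x (PS2 x)).
  { intros x. apply Reals_deriv, ps1_deriv; auto. }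
  assert (Hc2 : forall x, continuity_pt PS2 x).
  { intros x. eapply cont_of_deriv. apply ps2_deriv; auto. }
  assert (Hpos : forall x, 0 < PS x /\ 0 < PS1 x /\ 0 < PS2 x).
  { intros x. rewrite Epsi. apply ps_pos; auto. }
  assert (Hode : forall x, / 2 * sigma ^ 2 * PS2 x + theta * (mu - x) * PS1 x = lam * PS x).
  { intros x. rewrite Epsi. apply ps_ode; auto. }
  assert (HdPhic : forall x, continuity_pt dPhi x).
  { intros x. eapply cont_of_deriv. apply Hd2Phi. }
  assert (HD : forall x, Deriv PS x = PS1 x).
  { intros x. apply Deriv_eq. apply deriv_Reals. auto. }
  destruct (main_abstract theta sigma mu lam Phi dPhi PS PS1 PS2) as [A1 [A2 [A3 A4]]]; auto.
  exists (gam theta mu lam Phi PS PS1).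
  split; [|split; [|split]].
  - intros c H. rewrite !HD. split; [|split].
    apply (A1 c H). intros x Hx. apply (A1 c H). rewrite <- HD. auto. apply (A1 c H).
  - exact A2.
  - exact A3.
  - exact A4.
Qed.
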